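(* Let an extended spinor connection on $N$ be given, with spatial covariant differentiation $\nabla$, and let $\mathbf X,\mathbf Y$ be extended vector fields (components $X^i,Y^j$). In every equipped chart define the torsion $T^k_{ij}=\Gamma^k_{ij}-\Gamma^k_{ji}-c^k_{ij}$ and $\mathbf T(\mathbf X,\mathbf Y)^k=\sum_{i,j}T^k_{ij}X^iY^j$. For any function $F$ on the chart of $N$ let $$\mathcal D_iF=\sum_k\Upsilon^k_i\frac{\partial F}{\partial x^k}-\sum_{P=1}^J\sum_{I,J}(L_i\mathbf S[P])^I_J\frac{\partial F}{\partial S[P]^I_J}-\sum_{P=1}^J\sum_{I',J'}(L_i\tau(\mathbf S[P]))^{I'}_{J'}\frac{\partial F}{\partial\tau(S[P])^{I'}_{J'}},$$ and define the curvature components $$\mathfrak R^p_{qij}=\mathcal D_i\mathrm A^p_{j\,q}-\mathcal D_j\mathrm A^p_{i\,q}+\sum_{h=1}^2(\mathrm A^p_{i\,h}\mathrm A^h_{j\,q}-\mathrm A^p_{j\,h}\mathrm A^h_{i\,q})-\sum_{k=0}^3c^k_{ij}\mathrm A^p_{k\,q},$$ $$\bar{\mathfrak R}^p_{qij}=\mathcal D_i\bar{\mathrm A}^p_{j\,q}-\mathcal D_j\bar{\mathrm A}^p_{i\,q}+\sum_{h=1}^2(\bar{\mathrm A}^p_{i\,h}\bar{\mathrm A}^h_{j\,q}-\bar{\mathrm A}^p_{j\,h}\bar{\mathrm A}^h_{i\,q})-\sum_{k=0}^3c^k_{ij}\bar{\mathrm A}^p_{k\,q},$$ $$R^p_{qij}=\mathcal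 D_i\Gamma^p_{j\,q}-\mathcal D_j\Gamma^p_{i\,q}+\sum_{h=0}^3(\Gamma^p_{i\,h}\Gamma^h_{j\,q}-\Gamma^p_{j\,h}\Gamma^h_{i\,q})-\sum_{k=0}^3c^k_{ij}\Gamma^p_{k\,q}.$$ Let $\mathfrak N^p_q=\sum_{i,j}\mathfrak R^p_{qij}X^iY^j$, $\bar{\mathfrak N}^p_q=\sum_{i,j}\bar{\mathfrak R}^p_{qij}X^iY^j$, $N^p_q=\sum_{i,j}R^p_{qij}X^iY^j$ (extended fields of types $(1,1|0,0|0,0)$, $(0,0|1,1|0,0)$, $(0,0|0,0|1,1)$), and for $Q=1,\dots,J$ put $\mathbf U[Q]=-D(\mathfrak N,\bar{\mathfrak N},\mathbf N)\mathbf S[Q]$, $\bar{\mathbf U}[Q]=-D(\mathfrak N,\bar{\mathfrak N},\mathbf N)\tau(\mathbf S[Q])$. Then, as operators on extended spin-tensorial fields of every type, $$[\nabla_{\mathbf X},\nabla_{\mathbf Y}]=\nabla_{\mathbf U}+\sum_{Q=1}^J\vec\nabla_{\mathbf U[Q]}[Q]+\sum_{Q=1}^J\bar{\vec\nabla}_{\bar{\mathbf U}[Q]}[Q]+D(\mathfrak N,\bar{\mathfrak N},\mathbf N),$$ where $\mathbf U=\nabla_{\mathbf X}\mathbf Y-\nabla_{\mathbf Y}\mathbf X-\mathbf T(\mathbf X,\mathbf Y)$.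
   Context: Setting. $M$ is a 4-dimensional oriented, time-polarized space-time manifold with metric of signature $(+,-,-,-)$, with a spinor bundle $SM$. An equipped local chart has coordinates $x^0,\dots,x^3$, a spinor frame $\Psi_1,\Psi_2$ and associated tangent frame $\Upsilon_i=\sum_k\Upsilon^k_i\partial/\partial x^k$ ($i=0,..,3$); $c^k_{ij}$ are defined by $[\Upsilon_i,\Upsilon_j]=\sum_kc^k_{ij}\Upsilon_k$. A spin-tensor of type $(\alpha,\beta|\nu,\gamma|m,n)$ has components $X^{i_1\dots i_\alpha\bar i_1\dots\bar i_\nu h_1\dots h_m}_{j_1\dots j_\beta\bar j_1\dots\bar j_\gamma k_1\dots k_n}$ (spinor indices in $\{1,2\}$, tensor indices in $\{0,..,3\}$). The semilinear map $\tau$ sends type $(\alpha,\beta|\nu,\gamma|m,n)$ to $(\nu,\gamma|\alpha,\beta|m,n)$ by $\tau(S)^{i_1\dots i_\nu\bar i_1\dots\bar i_\alpha h}_{j_1\dots j_\gamma\bar j_1\dots\bar j_\beta k}=\overline{S^{\bar i_1\dots\bar i_\alpha i_1\dots i_\nu h}_{\bar j_1\dots\bar j_\beta j_1\dots j_\gamma k}}$. Composite bundle. Fix types $(\alpha_P,\beta_P|\nu_P,\gamma_P|m_P,n_P)$, $P=1,\dots,J$; $N$ is the direct sum of the corresponding spin-tensor bundles, a point being $q=(p,\mathbf S[1],\dots,\mathbf S[J])$; local coordinates $x^0,..,x^3$ and the components of all $\mathbf S[P]$. An extended spin-tensorial field of a type assigns smoothly to each $q$ a spin-tensor of that type at $\pi(q)$;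 components are functions of $x$, the components of the $\mathbf S[P]$ and their conjugates. $\partial/\partial S[P]^I_J$ and $\partial/\partial\tau(S[P])^{I'}_{J'}$ are Wirtinger derivatives (sums over $I,J$ resp. $I',J'$ run over all multi-indices of the types of $\mathbf S[P]$ resp. $\tau(\mathbf S[P])$). $\mathbf S[Q]$ and $\tau(\mathbf S[Q])$ are themselves extended fields. Native multivariate differentiations. For $\mathbf Y$ of type $(\alpha_P,\beta_P|\nu_P,\gamma_P|m_P,n_P)$: $\vec\nabla_{\mathbf Y}[P]\mathbf Z=\sum_{I,J}Y^I_J\,\partial\mathbf Z/\partial S[P]^I_J$; for $\mathbf Y$ of type $(\nu_P,\gamma_P|\alpha_P,\beta_P|m_P,n_P)$: $\bar{\vec\nabla}_{\mathbf Y}[P]\mathbf Z=\sum_{I',J'}Y^{I'}_{J'}\,\partial\mathbf Z/\partial\tau(S[P])^{I'}_{J'}$ (componentwise in $\mathbf Z$). Algebraic action and degenerate differentiation. For $2\times2$ matrix functions $a,b$, $4\times4$ matrix function $g$, and $X$ of type $(\varepsilon,\eta|\sigma,\zeta|e,f)$, $L(a,b,g)X$ has components $\sum_{\mu\le\varepsilon}\sum_v a^{a_\mu}_vX^{\dots v\dots}-\sum_{\mu\le\eta}\sum_w a^w_{b_\mu}X_{\dots w\dots}+\sum_{\mu\le\sigma}\sum_v b^{\bar a_\mu}_vX^{\dots v\dots}-\sum_{\mu\le\zeta}\sum_w b^w_{\bar b_\mu}X_{\dots w\dots}+\sum_{\mu\le e}\sum_v g^{c_\mu}_vX^{\dots v\dots}-\sum_{\mu\le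 f}\sum_w g^w_{d_\mu}X_{\dots w\dots}$ (the $\mu$-th index of the respective group replaced by the summation index). For $\mathfrak S$ of type $(1,1|0,0|0,0)$, $\bar{\mathfrak S}$ of type $(0,0|1,1|0,0)$, $\mathbf S$ of type $(0,0|0,0|1,1)$: $D(\mathfrak S,\bar{\mathfrak S},\mathbf S)X:=L(\mathfrak S,\bar{\mathfrak S},\mathbf S)X$. Extended spinor connection and covariant differentiation. An extended spinor connection is given in each equipped chart by smooth functions (of $x$ and the $\mathbf S[P]$ components and conjugates) $\mathrm A^k_{j\,i}$, $\bar{\mathrm A}^k_{j\,i}$ ($k,i\in\{1,2\}$, $j\in\{0,..,3\}$) and $\Gamma^k_{j\,i}$ ($k,i,j\in\{0,..,3\}$), transforming between charts so that $\nabla$ below is chart-independent. With $L_j:=L(\mathrm A_j,\bar{\mathrm A}_j,\Gamma_j)$, $\mathrm A_j=(\mathrm A^k_{j\,i})_{k,i}$ etc.: $$\nabla_j\mathbf Z=\sum_k\Upsilon^k_j\frac{\partial\mathbf Z}{\partial x^k}-\sum_{P}\sum_{I,J}(L_j\mathbf S[P])^I_J\frac{\partial\mathbf Z}{\partial S[P]^I_J}-\sum_{P}\sum_{I',J'}(L_j\tau(\mathbf S[P]))^{I'}_{J'}\frac{\partial\mathbf Z}{\partial\tau(S[P])^{I'}_{J'}}+L_j\mathbf Z,$$ and $\nabla_{\mathbf X}\mathbf Z=\sum_jX^j\nabla_j\mathbf Z$ for an extended vector field $\mathbf X$ (type $(0,0|0,0|1,0)$). $[A,B]=AB-BA$. 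*)

(* Defs.v *)
(* Everything is formulated in ONE equipped local chart of the composite
   bundle N (the statement is a chart-wise identity of components).       *)
From Stdlib Require Import Reals.
From Coquelicot Require Import Coquelicot.
From mathcomp Require Import all_boot.



Unset Printing Implicit Defensive.

Local Open Scope C_scope.

Record stype := STy { s_al : nat; s_be : nat; s_nu : nat; s_ga : nat;
                      s_m : nat; s_n : nat }.

Definition tau_ty (t : stype) : stype :=
  STy (s_nu t) (s_ga t) (s_al t) (s_be t) (s_m t) (s_n t).

Definition vec_ty : stype := STy 0 0 0 0 1 0.

(* A multi-index of type t: upper undotted spinor indices, lower undotted,
   upper dotted, lower dotted (all in {1,2} = 'I_2), upper tensor, lower
   tensor indices (in {0..3} = 'I_4). *)
Notation midx t :=
  ({ffun 'I_(s_al t) -> 'I_2} * {ffun 'I_(s_be t) -> 'I_2} *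
   {ffun 'I_(s_nu t) -> 'I_2} * {ffun 'I_(s_ga t) -> 'I_2} *
   {ffun 'I_(s_m t) -> 'I_4} * {ffun 'I_(s_n t) -> 'I_4})%type.

Definition mk {t : stype} a b c d e f : midx t := (a, b, c, d, e, f).
Definition ia {t : stype} (I : midx t) := I.1.1.1.1.1.
Definition ib {t : stype} (I : midx t) := I.1.1.1.1.2.
Definition ic {t : stype} (I : midx t) := I.1.1.1.2.
Definition id' {t : stype} (I : midx t) := I.1.1.2.
Definition ie {t : stype} (I : midx t) := I.1.2.
Definition if' {t : stype} (I : midx t) := I.2.

(* the index of tau(S) corresponding to an index of S:
   tau(S)^{i..,ibar..}_{j..,jbar..} = conj (S^{ibar..,i..}_{jbar..,j..}) *)
Definition swap_idx {t : stype} (I : midx (tau_ty t)) : midx t :=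
  mk (ic I) (id' I) (ia I) (ib I) (ie I) (if' I).

Definition upd {n : nat} {T : finType} (f : {ffun 'I_n -> T}) (mu : 'I_n) (v : T)
  : {ffun 'I_n -> T} := [ffun k => if k == mu then v else f k].

Definition csum {T : finType} (F : T -> C) : C := \big[Cplus/RtoC 0]_(i : T) F i.
Definition csumo {n : nat} (F : 'I_n -> C) : C := \big[Cplus/RtoC 0]_(i < n) F i.
Definition rsumo {n : nat} (F : 'I_n -> R) : R := \big[Rplus/R0]_(i < n) F i.

(* (pointwise).  a k i = a^k_i, b k i = b^k_i, g k i = g^k_i.           *)
Definition Lop {t : stype} (a b : 'I_2 -> 'I_2 -> C) (g : 'I_4 -> 'I_4 -> C)
  (X : midx t -> C) (I : midx t) : C :=
    csumo (fun mu => csumo (fun v : 'I_2 =>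
      a (ia I mu) v * X (mk (upd (ia I) mu v) (ib I) (ic I) (id' I) (ie I) (if' I))))
  - csumo (fun mu => csumo (fun w : 'I_2 =>
      a w (ib I mu) * X (mk (ia I) (upd (ib I) mu w) (ic I) (id' I) (ie I) (if' I))))
  + csumo (fun mu => csumo (fun v : 'I_2 =>
      b (ic I mu) v * X (mk (ia I) (ib I) (upd (ic I) mu v) (id' I) (ie I) (if' I))))
  - csumo (fun mu => csumo (fun w : 'I_2 =>
      b w (id' I mu) * X (mk (ia I) (ib I) (ic I) (upd (id' I) mu w) (ie I) (if' I))))
  + csumo (fun mu => csumo (fun v : 'I_4 =>
      g (ie I mu) v * X (mk (ia I) (ib I) (ic I) (id' I) (upd (ie I) mu v) (if' I))))
  - csumo (fun mu => csumo (fun w : 'I_4 =>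
      g w (if' I mu) * X (mk (ia I) (ib I) (ic I) (id' I) (ie I) (upd (if' I) mu w)))).

Definition dRC (f : R -> C) : C :=
  (Derive (fun s => fst (f s)) 0, Derive (fun s => snd (f s)) 0).
Definition exRC (f : R -> C) : Prop :=
  ex_derive (fun s => fst (f s)) 0 /\ ex_derive (fun s => snd (f s)) 0.

Definition xshift (x : 'I_4 -> R) (k : 'I_4) (s : R) : 'I_4 -> R :=
  fun l => if l == k then Rplus (x l) s else x l.

Section Chart.

(* the composite bundle: J summands of types tp P, P = 1..J *)
Variable J : nat.
Variable tp : 'I_J -> stype.

(* fibre coordinates: all components S[P]^I_J of all S[P] *)
Definition coordT := {P : 'I_J & midx (tp P)}.
Definition mkc (P : 'I_J) (I : midx (tp P)) : coordT :=
  @existT _ (fun P0 => midx (tp P0)) P I.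
Arguments mkc : clear implicits.

Definition pt := (('I_4 -> R) * (coordT -> C))%type.

Definition sshift (s : coordT -> C) (c : coordT) (w : C) : coordT -> C :=
  fun d => if d == c then s d + w else s d.

Inductive dir := Dx of 'I_4 | Dre of coordT | Dim of coordT.

Definition shift (q : pt) (d : dir) (s : R) : pt :=
  match d with
  | Dx k => (xshift q.1 k s, q.2)
  | Dre c => (q.1, sshift q.2 c (RtoC s))
  | Dim c => (q.1, sshift q.2 c (R0, s))
  end.

Definition pd (d : dir) (F : pt -> C) : pt -> C :=
  fun q => dRC (fun s => F (shift q d s)).

Definition pds (ds : seq dir) (F : pt -> C) : pt -> C := foldr pd F ds.

Definition smooth_on (Dm : pt -> Prop) (F : pt -> C) : Prop :=
  forall (ds : seq dir) (q : pt), Dm q ->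
    continuous (pds ds F) q /\ forall d, exRC (fun s => pds ds F (shift q d s)).

(* Wirtinger derivatives d/dz, d/dzbar w.r.t. the fibre coordinate c *)
Definition dz (c : coordT) (F : pt -> C) : pt -> C :=
  fun q => / 2 * (pd (Dre c) F q - Ci * pd (Dim c) F q).
Definition dzb (c : coordT) (F : pt -> C) : pt -> C :=
  fun q => / 2 * (pd (Dre c) F q + Ci * pd (Dim c) F q).

(* extended spin-tensorial fields of type t (components) *)
Definition field (t : stype) := midx t -> pt -> C.

Definition Sf (P : 'I_J) : field (tp P) := fun I q => q.2 (mkc P I).
Definition tauSf (P : 'I_J) : field (tau_ty (tp P)) :=
  fun I q => Cconj (q.2 (mkc P (swap_idx I))).

Definition Lf {t : stype} (a b : 'I_2 -> 'I_2 -> pt -> C) (g : 'I_4 -> 'I_4 -> pt -> C)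
  (Z : field t) : field t :=
  fun I q => Lop (fun k i => a k i q) (fun k i => b k i q) (fun k i => g k i q)
                 (fun I' => Z I' q) I.

Definition vidx (j : 'I_4) : midx vec_ty :=
  mk [ffun _ => ord0] [ffun _ => ord0] [ffun _ => ord0] [ffun _ => ord0]
     [ffun _ => j] [ffun _ => ord0].
Definition vcomp (X : field vec_ty) (j : 'I_4) : pt -> C := X (vidx j).
Definition vupper (I : midx vec_ty) : 'I_4 := ie I ord0.

(* tangent frame: Ups k i x = Upsilon^k_i ;  c k i j x = c^k_{ij} *)
Variable Ups : 'I_4 -> 'I_4 -> ('I_4 -> R) -> R.
Variable cc : 'I_4 -> 'I_4 -> 'I_4 -> ('I_4 -> R) -> R.
(* connection:  A j k i = A^k_{j i},  Ab j k i = Abar^k_{j i},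
   Gam j k i = Gamma^k_{j i} *)
Variable A Ab : 'I_4 -> 'I_2 -> 'I_2 -> pt -> C.
Variable Gam : 'I_4 -> 'I_4 -> 'I_4 -> pt -> C.

Definition Lj (j : 'I_4) {t : stype} (Z : field t) : field t :=
  Lf (A j) (Ab j) (Gam j) Z.

Definition Dop (i : 'I_4) (F : pt -> C) : pt -> C := fun q =>
    csumo (fun k => RtoC (Ups k i q.1) * pd (Dx k) F q)
  - csumo (fun P : 'I_J => csum (fun I : midx (tp P) =>
       Lj i (Sf P) I q * dz (mkc P I) F q))
  - csumo (fun P : 'I_J => csum (fun I' : midx (tau_ty (tp P)) =>
       Lj i (tauSf P) I' q * dzb (mkc P (swap_idx I')) F q)).

Definition nab (j : 'I_4) {t : stype} (Z : field t) : field t :=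
  fun I q => Dop j (Z I) q + Lj j Z I q.
Definition nabV (X : field vec_ty) {t : stype} (Z : field t) : field t :=
  fun I q => csumo (fun j => vcomp X j q * nab j Z I q).

Definition Tor (X Y : field vec_ty) : field vec_ty := fun I q =>
  let k := vupper I in
  csumo (fun i => csumo (fun j =>
    (Gam i k j q - Gam j k i q - RtoC (cc k i j q.1)) * vcomp X i q * vcomp Y j q)).

Definition Rc {n : nat} (B : 'I_4 -> 'I_n -> 'I_n -> pt -> C)
  (p r : 'I_n) (i j : 'I_4) : pt -> C := fun q =>
    Dop i (B j p r) q - Dop j (B i p r) q
  + csumo (fun h => B i p h q * B j h r q - B j p h q * B i h r q)
  - csumo (fun k => RtoC (cc k i j q.1) * B k p r q).

Definition Nc {n : nat} (B : 'I_4 -> 'I_n -> 'I_n -> pt -> C)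
  (X Y : field vec_ty) (p r : 'I_n) : pt -> C := fun q =>
  csumo (fun i => csumo (fun j => Rc B p r i j q * vcomp X i q * vcomp Y j q)).

Definition DN (X Y : field vec_ty) {t : stype} (Z : field t) : field t :=
  Lf (Nc A X Y) (Nc Ab X Y) (Nc Gam X Y) Z.

Definition UQ (X Y : field vec_ty) (Q : 'I_J) : field (tp Q) :=
  fun I q => - DN X Y (Sf Q) I q.
Definition UbQ (X Y : field vec_ty) (Q : 'I_J) : field (tau_ty (tp Q)) :=
  fun I q => - DN X Y (tauSf Q) I q.

Definition vnab (Q : 'I_J) (W : field (tp Q)) {t : stype} (Z : field t) : field t :=
  fun I q => csum (fun I' : midx (tp Q) => W I' q * dz (mkc Q I') (Z I) q).
Definition vnabb (Q : 'I_J) (W : field (tau_ty (tp Q))) {t : stype} (Z : field t)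
  : field t :=
  fun I q => csum (fun I' : midx (tau_ty (tp Q)) =>
                 W I' q * dzb (mkc Q (swap_idx I')) (Z I) q).

Definition Uf (X Y : field vec_ty) : field vec_ty :=
  fun I q => nabV X Y I q - nabV Y X I q - Tor X Y I q.

End Chart.

Definition frame_on (Ux : ('I_4 -> R) -> Prop)
  (Ups : 'I_4 -> 'I_4 -> ('I_4 -> R) -> R) : Prop :=
  forall x, Ux x -> forall a : 'I_4 -> R,
    (forall k, rsumo (fun i => Rmult (a i) (Ups k i x)) = R0) -> forall i, a i = R0.

(* [Upsilon_i, Upsilon_j] = sum_m c^m_{ij} Upsilon_m, in components *)
Definition bracket_rel (Ux : ('I_4 -> R) -> Prop)
  (Ups : 'I_4 -> 'I_4 -> ('I_4 -> R) -> R)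
  (cc : 'I_4 -> 'I_4 -> 'I_4 -> ('I_4 -> R) -> R) : Prop :=
  forall x, Ux x -> forall i j k : 'I_4,
    rsumo (fun l =>
      Rminus (Rmult (Ups l i x) (Derive (fun s => Ups k j (xshift x l s)) R0))
             (Rmult (Ups l j x) (Derive (fun s => Ups k i (xshift x l s)) R0)))
    = rsumo (fun m => Rmult (cc m i j x) (Ups k m x)).

(* Main.v *)
From HB Require Import structures.
Require Import Defs.
From Stdlib Require Import Reals FunctionalExtensionality.
From Coquelicot Require Import Coquelicot.
From mathcomp Require Import all_boot.
Local Open Scope C_scope.
Lemma Cplus_0_r' (x : C) : x + RtoC 0 = x. Proof. ring. Qed.
Lemma Cplus_0_l' (x : C) : RtoC 0 + x = x. Proof. ring. Qed.
Lemma Cplus_A (x y z : C) : x + (y + z) = x + y + z. Proof. ring. Qed.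
Lemma Cplus_C (x y : C) : x + y = y + x. Proof. ring. Qed.
HB.instance Definition _ := Monoid.isComLaw.Build C (RtoC 0) Cplus Cplus_A Cplus_C Cplus_0_l'.

Section Sums.
Implicit Types (T U : finType).

Lemma csum_ext T (F G : T -> C) : (forall i, F i = G i) -> csum F = csum G.
Proof. move=> H; apply: eq_bigr => i _; exact: H. Qed.
Lemma csum_add T (F G : T -> C) : csum (fun i => F i + G i) = csum F + csum G.
Proof. exact: big_split. Qed.
Lemma csum0 T : csum (fun _ : T => RtoC 0) = RtoC 0.
Proof. by apply: big1. Qed.
Lemma csum_mull T (c : C) (F : T -> C) : c * csum F = csum (fun i => c * F i).
Proof.
rewrite /csum; apply: (big_rec2 (fun x y => c * y = x)); first by ring.
by move=> i x y _ <-; ring.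
Qed.
Lemma csum_mulr T (c : C) (F : T -> C) : csum F * c = csum (fun i => F i * c).
Proof.
rewrite /csum; apply: (big_rec2 (fun x y => y * c = x)); first by ring.
by move=> i x y _ <-; ring.
Qed.
Lemma csum_opp T (F : T -> C) : - csum F = csum (fun i => - F i).
Proof.
rewrite /csum; apply: (big_rec2 (fun x y => - y = x)); first by ring.
by move=> i x y _ <-; ring.
Qed.
Lemma csum_sub T (F G : T -> C) : csum (fun i => F i - G i) = csum F - csum G.
Proof. rewrite /Cminus csum_add csum_opp //. Qed.
Lemma csum_exch T U (F : T -> U -> C) :
  csum (fun i => csum (fun j => F i j)) = csum (fun j => csum (fun i => F i j)).
Proof. exact: exchange_big. Qed.
Lemma csum_delta T (i0 : T) (F : T -> C) :
  csum (fun i => if i == i0 then F i else RtoC 0) = F i0.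
Proof.
rewrite /csum (bigD1 i0) //= eqxx big1 ?Cplus_0_r' // => i /negbTE -> //.
Qed.
Lemma csum_delta' T (i0 : T) (F : T -> C) :
  csum (fun i => if i0 == i then F i else RtoC 0) = F i0.
Proof.
rewrite -(csum_delta _ i0); apply: csum_ext => i; by rewrite eq_sym.
Qed.
Lemma csum_exch4 T1 T2 T3 T4 (F : T1 -> T2 -> T3 -> T4 -> C) :
  csum (fun a => csum (fun b => csum (fun c => csum (fun d => F a b c d))))
  = csum (fun c => csum (fun d => csum (fun a => csum (fun b => F a b c d)))).
Proof.
transitivity (csum (fun a => csum (fun c => csum (fun b => csum (fun d => F a b c d))))).
  apply: csum_ext => a; exact: csum_exch.
rewrite csum_exch; apply: csum_ext => c.
transitivity (csum (fun a => csum (fun d => csum (fun b => F a b c d)))).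
  apply: csum_ext => a; exact: csum_exch.
exact: csum_exch.
Qed.
Lemma csumoE n (F : 'I_n -> C) : csumo F = csum F. Proof. by []. Qed.
End Sums.
Section Upd.
Lemma updE {n} {T : finType} (f : {ffun 'I_n -> T}) mu v nu :
  upd f mu v nu = if nu == mu then v else f nu.
Proof. by rewrite /upd ffunE. Qed.
Lemma upd_upd {n} {T : finType} (f : {ffun 'I_n -> T}) mu v w :
  upd (upd f mu v) mu w = upd f mu w.
Proof. apply/ffunP => k; rewrite !updE; by case: (k == mu). Qed.
Lemma upd_comm {n} {T : finType} (f : {ffun 'I_n -> T}) mu v nu w :
  nu != mu -> upd (upd f mu v) nu w = upd (upd f nu w) mu v.
Proof.
move=> H; apply/ffunP => k; rewrite !updE.
case: (eqVneq k nu) => [->|]; first by rewrite (negbTE H).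
by [].
Qed.
Lemma upd_same {n} {T : finType} (f : {ffun 'I_n -> T}) mu v :
  upd f mu v mu = v.
Proof. by rewrite updE eqxx. Qed.
Lemma upd_other {n} {T : finType} (f : {ffun 'I_n -> T}) mu v nu :
  nu != mu -> upd f mu v nu = f nu.
Proof. by move=> H; rewrite updE (negbTE H). Qed.
End Upd.

Section Kop.
Variable t : stype.
Definition Kop {n : nat} {T : finType} (get : midx t -> {ffun 'I_n -> T})
  (set : midx t -> {ffun 'I_n -> T} -> midx t) (M : T -> T -> C)
  (X : midx t -> C) (I : midx t) : C :=
  csum (fun mu : 'I_n => csum (fun v : T =>
    M (get I mu) v * X (set I (upd (get I) mu v)))).

Lemma Kop_addX {n} {T : finType} get set (M : T -> T -> C) X1 X2 I :
  @Kop n T get set M (fun J => X1 J + X2 J) I = Kop get set M X1 I + Kop get set M X2 I.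
Proof.
rewrite /Kop -csum_add; apply: csum_ext => mu; rewrite -csum_add.
apply: csum_ext => v; ring.
Qed.
Lemma Kop_subX {n} {T : finType} get set (M : T -> T -> C) X1 X2 I :
  @Kop n T get set M (fun J => X1 J - X2 J) I = Kop get set M X1 I - Kop get set M X2 I.
Proof.
rewrite /Kop -csum_sub; apply: csum_ext => mu; rewrite -csum_sub.
apply: csum_ext => v; ring.
Qed.
Lemma Kop_sumX {n} {T : finType} {U : finType} get set (M : T -> T -> C)
  (c : U -> C) (V : U -> midx t -> C) I :
  @Kop n T get set M (fun J => csum (fun k => c k * V k J)) I
  = csum (fun k => c k * Kop get set M (V k) I).
Proof.
rewrite /Kop.
transitivity (csum (fun mu : 'I_n => csum (fun k => csum (fun v : T =>
   c k * (M (get I mu) v * V k (set I (upd (get I) mu v))))))).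
  apply: csum_ext => mu; rewrite csum_exch; apply: csum_ext => v.
  rewrite csum_mull; apply: csum_ext => k; ring.
rewrite csum_exch; apply: csum_ext => k; rewrite csum_mull; apply: csum_ext => mu.
by rewrite csum_mull.
Qed.
Lemma Kop_addM {n} {T : finType} get set (M1 M2 : T -> T -> C) X I :
  @Kop n T get set (fun x y => M1 x y + M2 x y) X I
  = Kop get set M1 X I + Kop get set M2 X I.
Proof.
rewrite /Kop -csum_add; apply: csum_ext => mu; rewrite -csum_add.
apply: csum_ext => v; ring.
Qed.
Lemma Kop_sumM {n} {T : finType} {U : finType} get set
  (c : U -> C) (M : U -> T -> T -> C) X I :
  @Kop n T get set (fun x y => csum (fun k => c k * M k x y)) X I
  = csum (fun k => c k * Kop get set (M k) X I).
Proof.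
rewrite /Kop.
transitivity (csum (fun mu : 'I_n => csum (fun k => csum (fun v : T =>
   c k * (M k (get I mu) v * X (set I (upd (get I) mu v))))))).
  apply: csum_ext => mu; rewrite csum_exch; apply: csum_ext => v.
  rewrite csum_mulr; apply: csum_ext => k; ring.
rewrite csum_exch; apply: csum_ext => k; rewrite csum_mull; apply: csum_ext => mu.
by rewrite csum_mull.
Qed.
Lemma Kop_scaleM {n} {T : finType} get set (c : C) (M : T -> T -> C) X I :
  @Kop n T get set (fun x y => c * M x y) X I = c * Kop get set M X I.
Proof.
rewrite /Kop csum_mull; apply: csum_ext => mu; rewrite csum_mull.
apply: csum_ext => v; ring.
Qed.
Lemma Kop_extM {n} {T : finType} get set (M1 M2 : T -> T -> C) X I :
  (forall x y, M1 x y = M2 x y) ->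
  @Kop n T get set M1 X I = Kop get set M2 X I.
Proof. move=> H; apply: csum_ext => mu; apply: csum_ext => v; by rewrite H. Qed.
Lemma Kop_extX {n} {T : finType} get set (M : T -> T -> C) X1 X2 I :
  (forall J, X1 J = X2 J) ->
  @Kop n T get set M X1 I = Kop get set M X2 I.
Proof. move=> H; apply: csum_ext => mu; apply: csum_ext => v; by rewrite H. Qed.

Lemma Kop_indep {n1 n2} {T1 T2 : finType}
  (g1 : midx t -> {ffun 'I_n1 -> T1}) (s1 : midx t -> {ffun 'I_n1 -> T1} -> midx t)
  (g2 : midx t -> {ffun 'I_n2 -> T2}) (s2 : midx t -> {ffun 'I_n2 -> T2} -> midx t)
  (H12 : forall I f, g1 (s2 I f) = g1 I)
  (H21 : forall I f, g2 (s1 I f) = g2 I)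
  (Hs : forall I f1 f2, s1 (s2 I f2) f1 = s2 (s1 I f1) f2)
  M1 M2 X I :
  Kop g1 s1 M1 (Kop g2 s2 M2 X) I = Kop g2 s2 M2 (Kop g1 s1 M1 X) I.
Proof.
rewrite /Kop.
transitivity (csum (fun mu => csum (fun v => csum (fun nu => csum (fun w =>
  M1 (g1 I mu) v * M2 (g2 I nu) w *
  X (s2 (s1 I (upd (g1 I) mu v)) (upd (g2 I) nu w))))))).
  apply: csum_ext => mu; apply: csum_ext => v; rewrite csum_mull.
  apply: csum_ext => nu; rewrite csum_mull; apply: csum_ext => w.
  rewrite !H21; ring.
symmetry.
transitivity (csum (fun nu => csum (fun w => csum (fun mu => csum (fun v =>
  M1 (g1 I mu) v * M2 (g2 I nu) w *
  X (s2 (s1 I (upd (g1 I) mu v)) (upd (g2 I) nu w))))))).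
  apply: csum_ext => nu; apply: csum_ext => w; rewrite csum_mull.
  apply: csum_ext => mu; rewrite csum_mull; apply: csum_ext => v.
  rewrite !H12 Hs; ring.
exact: csum_exch4.
Qed.

Lemma Kop_comm {n} {T : finType}
  (g : midx t -> {ffun 'I_n -> T}) (s : midx t -> {ffun 'I_n -> T} -> midx t)
  (Hgs : forall I f, g (s I f) = f)
  (Hss : forall I f f', s (s I f) f' = s I f')
  M1 M2 X I :
  Kop g s M1 (Kop g s M2 X) I - Kop g s M2 (Kop g s M1 X) I
  = Kop g s (fun x y => csum (fun h => M1 x h * M2 h y - M2 x h * M1 h y)) X I.
Proof.
pose O (N1 N2 : T -> T -> C) := csum (fun mu => csum (fun v => csum (fun nu => csum (fun w =>
   if nu == mu then RtoC 0 else
   N1 (g I mu) v * N2 (g I nu) w * X (s I (upd (upd (g I) mu v) nu w)))))).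
pose Dg (N1 N2 : T -> T -> C) := csum (fun mu => csum (fun v => csum (fun w =>
   N1 (g I mu) v * N2 v w * X (s I (upd (g I) mu w))))).
have split : forall N1 N2, Kop g s N1 (Kop g s N2 X) I = Dg N1 N2 + O N1 N2.
  move=> N1 N2; rewrite /Kop /Dg /O -csum_add; apply: csum_ext => mu.
  rewrite -csum_add; apply: csum_ext => v.
  rewrite Hgs csum_mull.
  rewrite (_ : csum _ = csum (fun nu => (if nu == mu then
       csum (fun w => N1 (g I mu) v * N2 v w * X (s I (upd (g I) mu w)))
       else RtoC 0) + csum (fun w => if nu == mu then RtoC 0 else
       N1 (g I mu) v * N2 (g I nu) w * X (s I (upd (upd (g I) mu v) nu w))))).
    by rewrite csum_add csum_delta.
  apply: csum_ext => nu; case: eqP => [->|/eqP ne].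
    rewrite csum0 Cplus_0_r' csum_mull; apply: csum_ext => w.
    rewrite Hss upd_same upd_upd; ring.
  rewrite Cplus_0_l' csum_mull; apply: csum_ext => w; rewrite Hss upd_other //; ring.
have sym : O M1 M2 = O M2 M1.
  rewrite [RHS]/O csum_exch4 /O; apply: csum_ext => a; apply: csum_ext => b.
  apply: csum_ext => c; apply: csum_ext => d.
  rewrite eq_sym; case: eqP => [//|/eqP ne].
  rewrite upd_comm; first ring. by rewrite eq_sym. 
rewrite !split sym.
have -> : forall a b c : C, a + c - (b + c) = a - b by move=> *; ring.
rewrite /Dg /Kop -csum_sub; apply: csum_ext => mu.
rewrite -csum_sub.
under csum_ext => v do rewrite -csum_sub.
rewrite csum_exch; apply: csum_ext => w.
rewrite csum_mulr; apply: csum_ext => v; ring.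
Qed.
End Kop.
Section Lenses.
Variable t : stype.
Definition sA (I : midx t) f : midx t := mk f (ib I) (ic I) (id' I) (ie I) (if' I).
Definition sB (I : midx t) f : midx t := mk (ia I) f (ic I) (id' I) (ie I) (if' I).
Definition sC (I : midx t) f : midx t := mk (ia I) (ib I) f (id' I) (ie I) (if' I).
Definition sD (I : midx t) f : midx t := mk (ia I) (ib I) (ic I) f (ie I) (if' I).
Definition sE (I : midx t) f : midx t := mk (ia I) (ib I) (ic I) (id' I) f (if' I).
Definition sF (I : midx t) f : midx t := mk (ia I) (ib I) (ic I) (id' I) (ie I) f.

Definition tr {T : Type} (M : T -> T -> C) : T -> T -> C := fun x y => - M y x.

Definition Lop' (a b : 'I_2 -> 'I_2 -> C) (g : 'I_4 -> 'I_4 -> C) (X : midx t -> C) : midx t -> C :=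
  fun I =>
  Kop t ia sA a X I + Kop t ib sB (tr a) X I + Kop t ic sC b X I + Kop t id' sD (tr b) X I
  + Kop t ie sE g X I + Kop t if' sF (tr g) X I.

Lemma neg_K {n} {T : finType} (gt : midx t -> {ffun 'I_n -> T}) st (M : T -> T -> C) X I :
  csumo (fun mu => csum (fun w : T => M w (gt I mu) * X (st I (upd (gt I) mu w))))
  = - Kop t gt st (tr M) X I.
Proof.
rewrite /Kop csum_opp; apply: csum_ext => mu; rewrite csum_opp; apply: csum_ext => w.
rewrite /tr; ring.
Qed.

Lemma Lop_K a b g X : Lop a b g X = Lop' a b g X.
Proof.
apply: functional_extensionality => I.
rewrite /Lop /Lop' /Cminus.
rewrite (neg_K ib sB) (neg_K id' sD) (neg_K if' sF).
have oo : forall x : C, - - x = x by move=> x; ring.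
rewrite !oo; by congr (_ + _ + _ + _ + _ + _).
Qed.
Definition brk {T : finType} (M N : T -> T -> C) : T -> T -> C :=
  fun x y => csum (fun h => M x h * N h y - N x h * M h y).
Lemma gsA I f : ia (sA I f) = f. Proof. by case: I => [[[[[? ?] ?] ?] ?] ?]. Qed.
Lemma ssA I f f' : sA (sA I f) f' = sA I f'. Proof. by case: I => [[[[[? ?] ?] ?] ?] ?]. Qed.
Lemma gsB I f : ib (sB I f) = f. Proof. by case: I => [[[[[? ?] ?] ?] ?] ?]. Qed.
Lemma ssB I f f' : sB (sB I f) f' = sB I f'. Proof. by case: I => [[[[[? ?] ?] ?] ?] ?]. Qed.
Lemma swBA M1 M2 X I :
  Kop t ib sB M1 (Kop t ia sA M2 X) I = Kop t ia sA M2 (Kop t ib sB M1 X) I.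
Proof. apply: Kop_indep; move=> [[[[[? ?] ?] ?] ?] ?] *; reflexivity. Qed.
Lemma gsC I f : ic (sC I f) = f. Proof. by case: I => [[[[[? ?] ?] ?] ?] ?]. Qed.
Lemma ssC I f f' : sC (sC I f) f' = sC I f'. Proof. by case: I => [[[[[? ?] ?] ?] ?] ?]. Qed.
Lemma swCA M1 M2 X I :
  Kop t ic sC M1 (Kop t ia sA M2 X) I = Kop t ia sA M2 (Kop t ic sC M1 X) I.
Proof. apply: Kop_indep; move=> [[[[[? ?] ?] ?] ?] ?] *; reflexivity. Qed.
Lemma swCB M1 M2 X I :
  Kop t ic sC M1 (Kop t ib sB M2 X) I = Kop t ib sB M2 (Kop t ic sC M1 X) I.
Proof. apply: Kop_indep; move=> [[[[[? ?] ?] ?] ?] ?] *; reflexivity. Qed.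
Lemma gsD I f : id' (sD I f) = f. Proof. by case: I => [[[[[? ?] ?] ?] ?] ?]. Qed.
Lemma ssD I f f' : sD (sD I f) f' = sD I f'. Proof. by case: I => [[[[[? ?] ?] ?] ?] ?]. Qed.
Lemma swDA M1 M2 X I :
  Kop t id' sD M1 (Kop t ia sA M2 X) I = Kop t ia sA M2 (Kop t id' sD M1 X) I.
Proof. apply: Kop_indep; move=> [[[[[? ?] ?] ?] ?] ?] *; reflexivity. Qed.
Lemma swDB M1 M2 X I :
  Kop t id' sD M1 (Kop t ib sB M2 X) I = Kop t ib sB M2 (Kop t id' sD M1 X) I.
Proof. apply: Kop_indep; move=> [[[[[? ?] ?] ?] ?] ?] *; reflexivity. Qed.
Lemma swDC M1 M2 X I :
  Kop t id' sD M1 (Kop t ic sC M2 X) I = Kop t ic sC M2 (Kop t id' sD M1 X) I.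
Proof. apply: Kop_indep; move=> [[[[[? ?] ?] ?] ?] ?] *; reflexivity. Qed.
Lemma gsE I f : ie (sE I f) = f. Proof. by case: I => [[[[[? ?] ?] ?] ?] ?]. Qed.
Lemma ssE I f f' : sE (sE I f) f' = sE I f'. Proof. by case: I => [[[[[? ?] ?] ?] ?] ?]. Qed.
Lemma swEA M1 M2 X I :
  Kop t ie sE M1 (Kop t ia sA M2 X) I = Kop t ia sA M2 (Kop t ie sE M1 X) I.
Proof. apply: Kop_indep; move=> [[[[[? ?] ?] ?] ?] ?] *; reflexivity. Qed.
Lemma swEB M1 M2 X I :
  Kop t ie sE M1 (Kop t ib sB M2 X) I = Kop t ib sB M2 (Kop t ie sE M1 X) I.
Proof. apply: Kop_indep; move=> [[[[[? ?] ?] ?] ?] ?] *; reflexivity. Qed.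
Lemma swEC M1 M2 X I :
  Kop t ie sE M1 (Kop t ic sC M2 X) I = Kop t ic sC M2 (Kop t ie sE M1 X) I.
Proof. apply: Kop_indep; move=> [[[[[? ?] ?] ?] ?] ?] *; reflexivity. Qed.
Lemma swED M1 M2 X I :
  Kop t ie sE M1 (Kop t id' sD M2 X) I = Kop t id' sD M2 (Kop t ie sE M1 X) I.
Proof. apply: Kop_indep; move=> [[[[[? ?] ?] ?] ?] ?] *; reflexivity. Qed.
Lemma gsF I f : if' (sF I f) = f. Proof. by case: I => [[[[[? ?] ?] ?] ?] ?]. Qed.
Lemma ssF I f f' : sF (sF I f) f' = sF I f'. Proof. by case: I => [[[[[? ?] ?] ?] ?] ?]. Qed.
Lemma swFA M1 M2 X I :
  Kop t if' sF M1 (Kop t ia sA M2 X) I = Kop t ia sA M2 (Kop t if' sF M1 X) I.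
Proof. apply: Kop_indep; move=> [[[[[? ?] ?] ?] ?] ?] *; reflexivity. Qed.
Lemma swFB M1 M2 X I :
  Kop t if' sF M1 (Kop t ib sB M2 X) I = Kop t ib sB M2 (Kop t if' sF M1 X) I.
Proof. apply: Kop_indep; move=> [[[[[? ?] ?] ?] ?] ?] *; reflexivity. Qed.
Lemma swFC M1 M2 X I :
  Kop t if' sF M1 (Kop t ic sC M2 X) I = Kop t ic sC M2 (Kop t if' sF M1 X) I.
Proof. apply: Kop_indep; move=> [[[[[? ?] ?] ?] ?] ?] *; reflexivity. Qed.
Lemma swFD M1 M2 X I :
  Kop t if' sF M1 (Kop t id' sD M2 X) I = Kop t id' sD M2 (Kop t if' sF M1 X) I.
Proof. apply: Kop_indep; move=> [[[[[? ?] ?] ?] ?] ?] *; reflexivity. Qed.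
Lemma swFE M1 M2 X I :
  Kop t if' sF M1 (Kop t ie sE M2 X) I = Kop t ie sE M2 (Kop t if' sF M1 X) I.
Proof. apply: Kop_indep; move=> [[[[[? ?] ?] ?] ?] ?] *; reflexivity. Qed.
Lemma KcA M1 M2 X I :
  Kop t ia sA (brk M1 M2) X I = Kop t ia sA M1 (Kop t ia sA M2 X) I - Kop t ia sA M2 (Kop t ia sA M1 X) I.
Proof. by rewrite (Kop_comm t ia sA (gsA) (ssA)). Qed.
Lemma KctA M1 M2 X I :
  Kop t ia sA (tr (brk M1 M2)) X I = Kop t ia sA (tr M1) (Kop t ia sA (tr M2) X) I - Kop t ia sA (tr M2) (Kop t ia sA (tr M1) X) I.
Proof. rewrite (Kop_comm t ia sA (gsA) (ssA)); apply: Kop_extM => x y.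
rewrite /tr /brk csum_opp; apply: csum_ext => h; ring. Qed.
Lemma KcB M1 M2 X I :
  Kop t ib sB (brk M1 M2) X I = Kop t ib sB M1 (Kop t ib sB M2 X) I - Kop t ib sB M2 (Kop t ib sB M1 X) I.
Proof. by rewrite (Kop_comm t ib sB (gsB) (ssB)). Qed.
Lemma KctB M1 M2 X I :
  Kop t ib sB (tr (brk M1 M2)) X I = Kop t ib sB (tr M1) (Kop t ib sB (tr M2) X) I - Kop t ib sB (tr M2) (Kop t ib sB (tr M1) X) I.
Proof. rewrite (Kop_comm t ib sB (gsB) (ssB)); apply: Kop_extM => x y.
rewrite /tr /brk csum_opp; apply: csum_ext => h; ring. Qed.
Lemma KcC M1 M2 X I :
  Kop t ic sC (brk M1 M2) X I = Kop t ic sC M1 (Kop t ic sC M2 X) I - Kop t ic sC M2 (Kop t ic sC M1 X) I.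
Proof. by rewrite (Kop_comm t ic sC (gsC) (ssC)). Qed.
Lemma KctC M1 M2 X I :
  Kop t ic sC (tr (brk M1 M2)) X I = Kop t ic sC (tr M1) (Kop t ic sC (tr M2) X) I - Kop t ic sC (tr M2) (Kop t ic sC (tr M1) X) I.
Proof. rewrite (Kop_comm t ic sC (gsC) (ssC)); apply: Kop_extM => x y.
rewrite /tr /brk csum_opp; apply: csum_ext => h; ring. Qed.
Lemma KcD M1 M2 X I :
  Kop t id' sD (brk M1 M2) X I = Kop t id' sD M1 (Kop t id' sD M2 X) I - Kop t id' sD M2 (Kop t id' sD M1 X) I.
Proof. by rewrite (Kop_comm t id' sD (gsD) (ssD)). Qed.
Lemma KctD M1 M2 X I :
  Kop t id' sD (tr (brk M1 M2)) X I = Kop t id' sD (tr M1) (Kop t id' sD (tr M2) X) I - Kop t id' sD (tr M2) (Kop t id' sD (tr M1) X) I.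
Proof. rewrite (Kop_comm t id' sD (gsD) (ssD)); apply: Kop_extM => x y.
rewrite /tr /brk csum_opp; apply: csum_ext => h; ring. Qed.
Lemma KcE M1 M2 X I :
  Kop t ie sE (brk M1 M2) X I = Kop t ie sE M1 (Kop t ie sE M2 X) I - Kop t ie sE M2 (Kop t ie sE M1 X) I.
Proof. by rewrite (Kop_comm t ie sE (gsE) (ssE)). Qed.
Lemma KctE M1 M2 X I :
  Kop t ie sE (tr (brk M1 M2)) X I = Kop t ie sE (tr M1) (Kop t ie sE (tr M2) X) I - Kop t ie sE (tr M2) (Kop t ie sE (tr M1) X) I.
Proof. rewrite (Kop_comm t ie sE (gsE) (ssE)); apply: Kop_extM => x y.
rewrite /tr /brk csum_opp; apply: csum_ext => h; ring. Qed.
Lemma KcF M1 M2 X I :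
  Kop t if' sF (brk M1 M2) X I = Kop t if' sF M1 (Kop t if' sF M2 X) I - Kop t if' sF M2 (Kop t if' sF M1 X) I.
Proof. by rewrite (Kop_comm t if' sF (gsF) (ssF)). Qed.
Lemma KctF M1 M2 X I :
  Kop t if' sF (tr (brk M1 M2)) X I = Kop t if' sF (tr M1) (Kop t if' sF (tr M2) X) I - Kop t if' sF (tr M2) (Kop t if' sF (tr M1) X) I.
Proof. rewrite (Kop_comm t if' sF (gsF) (ssF)); apply: Kop_extM => x y.
rewrite /tr /brk csum_opp; apply: csum_ext => h; ring. Qed.


Lemma Lop_comm a b g a' b' g' (X : midx t -> C) I :
  Lop a b g (Lop a' b' g' X) I - Lop a' b' g' (Lop a b g X) I
  = Lop (brk a a') (brk b b') (brk g g') X I.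
Proof.
rewrite !Lop_K /Lop' !Kop_addX.
rewrite !(swBA,swCA,swCB,swDA,swDB,swDC,swEA,swEB,swEC,swED,swFA,swFB,swFC,swFD,swFE).
rewrite KcA KctB KcC KctD KcE KctF.
repeat match goal with |- context [Kop ?t0 ?gg ?ss ?M ?Y ?I0] => let z := fresh "z" in set z := Kop t0 gg ss M Y I0 end.
ring.
Qed.
End Lenses.
Ltac kring := repeat match goal with |- context [Kop ?t0 ?gg ?ss ?M ?Y ?I0] => let z := fresh "z" in set z := Kop t0 gg ss M Y I0 end; ring.
Section LopLin.
Variable t : stype.
Implicit Types (X : midx t -> C) (a b : 'I_2 -> 'I_2 -> C) (g : 'I_4 -> 'I_4 -> C).

Lemma Lop_addX a b g X1 X2 I :
  Lop a b g (fun J => X1 J + X2 J) I = Lop a b g X1 I + Lop a b g X2 I.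
Proof.
rewrite !Lop_K /Lop' !Kop_addX.
kring.
Qed.
Lemma Lop_subX a b g X1 X2 I :
  Lop a b g (fun J => X1 J - X2 J) I = Lop a b g X1 I - Lop a b g X2 I.
Proof.
rewrite !Lop_K /Lop' !Kop_subX.
kring.
Qed.
Lemma Lop_sumX {U : finType} a b g (c : U -> C) (V : U -> midx t -> C) I :
  Lop a b g (fun J => csum (fun k => c k * V k J)) I
  = csum (fun k => c k * Lop a b g (V k) I).
Proof.
rewrite !Lop_K /Lop' !Kop_sumX.
rewrite -!csum_add; apply: csum_ext => k; rewrite Lop_K /Lop'; kring.
Qed.
Lemma Lop_extX a b g X1 X2 I :
  (forall J, X1 J = X2 J) -> Lop a b g X1 I = Lop a b g X2 I.
Proof. move=> H; have -> : X1 = X2 by apply: functional_extensionality. by []. Qed.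
Lemma Lop_extM a1 b1 g1 a2 b2 g2 X I :
  (forall x y, a1 x y = a2 x y) -> (forall x y, b1 x y = b2 x y) ->
  (forall x y, g1 x y = g2 x y) -> Lop a1 b1 g1 X I = Lop a2 b2 g2 X I.
Proof.
move=> Ha Hb Hg.
have -> : a1 = a2 by do 2 (apply: functional_extensionality => ?); exact: Ha.
have -> : b1 = b2 by do 2 (apply: functional_extensionality => ?); exact: Hb.
have -> : g1 = g2 by do 2 (apply: functional_extensionality => ?); exact: Hg.
by [].
Qed.

Lemma tr_add {T : Type} (M1 M2 : T -> T -> C) x y :
  tr (fun x y => M1 x y + M2 x y) x y = tr M1 x y + tr M2 x y.
Proof. rewrite /tr; ring. Qed.
Lemma tr_sub {T : Type} (M1 M2 : T -> T -> C) x y :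
  tr (fun x y => M1 x y - M2 x y) x y = tr M1 x y - tr M2 x y.
Proof. rewrite /tr; ring. Qed.
Lemma tr_sum {T : Type} {U : finType} (c : U -> C) (M : U -> T -> T -> C) x y :
  tr (fun x y => csum (fun k => c k * M k x y)) x y = csum (fun k => c k * tr (M k) x y).
Proof. rewrite /tr csum_opp; apply: csum_ext => k; ring. Qed.

Lemma tr_addF {T : Type} (M1 M2 : T -> T -> C) :
  tr (fun x y => M1 x y + M2 x y) = (fun x y => tr M1 x y + tr M2 x y).
Proof. do 2 (apply: functional_extensionality => ?); exact: tr_add. Qed.
Lemma tr_subF {T : Type} (M1 M2 : T -> T -> C) :
  tr (fun x y => M1 x y - M2 x y) = (fun x y => tr M1 x y - tr M2 x y).
Proof. do 2 (apply: functional_extensionality => ?); exact: tr_sub. Qed.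
Lemma tr_sumF {T : Type} {U : finType} (c : U -> C) (M : U -> T -> T -> C) :
  tr (fun x y => csum (fun k => c k * M k x y)) = (fun x y => csum (fun k => c k * tr (M k) x y)).
Proof. do 2 (apply: functional_extensionality => ?); exact: tr_sum. Qed.
Lemma Kop_subM {n} {T : finType} get set (M1 M2 : T -> T -> C) X I :
  @Kop t n T get set (fun x y => M1 x y - M2 x y) X I
  = Kop t get set M1 X I - Kop t get set M2 X I.
Proof.
rewrite /Kop -csum_sub; apply: csum_ext => mu; rewrite -csum_sub.
apply: csum_ext => v; ring.
Qed.

Lemma Lop_addM a1 b1 g1 a2 b2 g2 X I :
  Lop (fun x y => a1 x y + a2 x y) (fun x y => b1 x y + b2 x y) (fun x y => g1 x y + g2 x y) X I
  = Lop a1 b1 g1 X I + Lop a2 b2 g2 X I.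
Proof.
rewrite !Lop_K /Lop'.
rewrite !tr_addF !Kop_addM.
kring.
Qed.
Lemma Lop_subM a1 b1 g1 a2 b2 g2 X I :
  Lop (fun x y => a1 x y - a2 x y) (fun x y => b1 x y - b2 x y) (fun x y => g1 x y - g2 x y) X I
  = Lop a1 b1 g1 X I - Lop a2 b2 g2 X I.
Proof.
rewrite !Lop_K /Lop'.
rewrite !tr_subF !Kop_subM.
kring.
Qed.
Lemma Lop_sumM {U : finType} (c : U -> C) (a b : U -> 'I_2 -> 'I_2 -> C)
  (g : U -> 'I_4 -> 'I_4 -> C) X I :
  Lop (fun x y => csum (fun k => c k * a k x y)) (fun x y => csum (fun k => c k * b k x y))
      (fun x y => csum (fun k => c k * g k x y)) X I
  = csum (fun k => c k * Lop (a k) (b k) (g k) X I).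
Proof.
rewrite !Lop_K /Lop'.
rewrite !tr_sumF !Kop_sumM.
rewrite -!csum_add; apply: csum_ext => k; rewrite Lop_K /Lop'; kring.
Qed.
End LopLin.
Section RC.
Implicit Types (f g : R -> C).
Lemma exRC_add f g : exRC f -> exRC g -> exRC (fun s => f s + g s).
Proof. move=> [f1 f2] [g1 g2]; split; simpl; exact: ex_derive_plus. Qed.
Lemma dRC_add f g : exRC f -> exRC g -> dRC (fun s => f s + g s) = dRC f + dRC g.
Proof.
move=> [f1 f2] [g1 g2]; rewrite /dRC /=.
by rewrite (Derive_plus (fun s => fst (f s))) // (Derive_plus (fun s => snd (f s))).
Qed.
Lemma exRC_const (c : C) : exRC (fun _ => c).
Proof. split; exact: ex_derive_const. Qed.
Lemma dRC_const (c : C) : dRC (fun _ => c) = RtoC 0.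
Proof. by rewrite /dRC !Derive_const. Qed.
Lemma exRC_mul f g : exRC f -> exRC g -> exRC (fun s => f s * g s).
Proof.
move=> [f1 f2] [g1 g2]; split; simpl.
- apply: ex_derive_minus; exact: ex_derive_mult.
- apply: ex_derive_plus; exact: ex_derive_mult.
Qed.
Lemma dRC_mul f g : exRC f -> exRC g ->
  dRC (fun s => f s * g s) = dRC f * g 0 + f 0 * dRC g.
Proof.
move=> [f1 f2] [g1 g2]; rewrite /dRC /=.
rewrite (Derive_minus (fun s => Rmult (fst (f s)) (fst (g s)))); try exact: ex_derive_mult.
rewrite (Derive_plus (fun s => Rmult (fst (f s)) (snd (g s)))); try exact: ex_derive_mult.
rewrite !Derive_mult //.
apply: injective_projections => /=; ring.
Qed.
Lemma exRC_conj f : exRC f -> exRC (fun s => Cconj (f s)).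
Proof. move=> [f1 f2]; split => //=; exact: ex_derive_opp. Qed.
Lemma dRC_conj f : dRC (fun s => Cconj (f s)) = Cconj (dRC f).
Proof. by rewrite /dRC /= Derive_opp. Qed.
Lemma exRC_ext f g : (forall s, f s = g s) -> exRC f -> exRC g.
Proof. move=> H; have -> : g = f by apply: functional_extensionality. by []. Qed.
End RC.

Section Calc.
Variable J : nat.
Variable tp : 'I_J -> stype.
Notation pt := (pt J tp).
Notation dir := (dir J tp).
Notation shift := (shift J tp).
Notation pd := (pd J tp).

Lemma shift0 (q : pt) (d : dir) : shift q d R0 = q.
Proof.
case: q => x z; case: d => [k|c|c] /=.
- congr pair; apply: functional_extensionality => l; rewrite /xshift.
  case: eqP => // ->; by rewrite Rplus_0_r.
- congr pair; apply: functional_extensionality => e; rewrite /sshift.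
  case: eqP => // ->; rewrite /RtoC; apply: injective_projections => /=; ring.
- congr pair; apply: functional_extensionality => e; rewrite /sshift.
  case: eqP => // ->; apply: injective_projections => /=; ring.
Qed.

Definition diffat (q : pt) (F : pt -> C) : Prop :=
  forall d : dir, exRC (fun s => F (shift q d s)).

Lemma diffat_add q F G : diffat q F -> diffat q G -> diffat q (fun p => F p + G p).
Proof. move=> HF HG d; exact: exRC_add. Qed.
Lemma diffat_mul q F G : diffat q F -> diffat q G -> diffat q (fun p => F p * G p).
Proof. move=> HF HG d; exact: exRC_mul. Qed.
Lemma diffat_const q c : diffat q (fun _ => c).
Proof. move=> d; exact: exRC_const. Qed.
Lemma diffat_conj q F : diffat q F -> diffat q (fun p => Cconj (F p)).
Proof. move=> HF d; exact: exRC_conj. Qed.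
Lemma diffat_ext q F G : (forall p, F p = G p) -> diffat q F -> diffat q G.
Proof. move=> H; have -> : G = F by apply: functional_extensionality. by []. Qed.
Lemma diffat_opp q F : diffat q F -> diffat q (fun p => - F p).
Proof.
move=> HF; apply: (diffat_ext _ (fun p => RtoC (-1) * F p)).
  move=> p; ring.
exact: diffat_mul (diffat_const _ _) HF.
Qed.
Lemma diffat_sub q F G : diffat q F -> diffat q G -> diffat q (fun p => F p - G p).
Proof. move=> HF HG; apply: diffat_add => //; exact: diffat_opp. Qed.
Lemma diffat_sum q {T : finType} (F : T -> pt -> C) :
  (forall i, diffat q (F i)) -> diffat q (fun p => csum (fun i => F i p)).
Proof.
move=> H.
have E : forall r : seq T, diffat q (fun p => \big[Cplus/RtoC 0]_(i <- r) F i p).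
  elim => [|i r IH].
    apply: (diffat_ext _ (fun _ => RtoC 0)) => [p|]; first by rewrite big_nil.
    exact: diffat_const.
  apply: (diffat_ext _ (fun p => F i p + \big[Cplus/RtoC 0]_(j <- r) F j p)).
    by move=> p; rewrite big_cons.
  exact: diffat_add.
exact: E.
Qed.

Definition isder (del : (pt -> C) -> C) (q : pt) : Prop :=
  [/\ forall F G, diffat q F -> diffat q G -> del (fun p => F p + G p) = del F + del G,
      forall F G, diffat q F -> diffat q G -> del (fun p => F p * G p) = del F * G q + F q * del G
    & forall c, del (fun _ => c) = RtoC 0].

Section Der.
Variable del : (pt -> C) -> C.
Variable q : pt.
Hypothesis Hd : isder del q.
Lemma der_add F G : diffat q F -> diffat q G -> del (fun p => F p + G p) = del F + del G.
Proof. by case: Hd => H _ _; apply: H. Qed.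
Lemma der_mul F G : diffat q F -> diffat q G -> del (fun p => F p * G p) = del F * G q + F q * del G.
Proof. by case: Hd => _ H _; apply: H. Qed.
Lemma der_const c : del (fun _ => c) = RtoC 0.
Proof. by case: Hd. Qed.
Lemma der_ext F G : (forall p, F p = G p) -> del F = del G.
Proof. move=> H; have -> : F = G by apply: functional_extensionality. by []. Qed.
Lemma der_scal c F : diffat q F -> del (fun p => c * F p) = c * del F.
Proof. move=> HF; rewrite der_mul ?der_const //; first ring. exact: diffat_const. Qed.
Lemma der_opp F : diffat q F -> del (fun p => - F p) = - del F.
Proof.
move=> HF; rewrite (der_ext _ (fun p => RtoC (-1) * F p)) ?der_scal //; first ring.
move=> p; ring.
Qed.
Lemma der_sub F G : diffat q F -> diffat q G -> del (fun p => F p - G p) = del F - del G.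
Proof.
move=> HF HG; rewrite /Cminus der_add ?der_opp //; exact: diffat_opp.
Qed.
Lemma der_sum {T : finType} (F : T -> pt -> C) :
  (forall i, diffat q (F i)) -> del (fun p => csum (fun i => F i p)) = csum (fun i => del (F i)).
Proof.
move=> H.
have E : forall r : seq T, del (fun p => \big[Cplus/RtoC 0]_(i <- r) F i p)
     = \big[Cplus/RtoC 0]_(i <- r) del (F i) /\
     diffat q (fun p => \big[Cplus/RtoC 0]_(i <- r) F i p).
  elim => [|i r [IH1 IH2]].
    split.
      rewrite big_nil (der_ext _ (fun _ => RtoC 0)) ?der_const // => p; by rewrite big_nil.
    apply: (diffat_ext _ (fun _ => RtoC 0)) => [p|]; first by rewrite big_nil.
    exact: diffat_const.
  split.
    rewrite (der_ext _ (fun p => F i p + \big[Cplus/RtoC 0]_(j <- r) F j p)).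
      by rewrite der_add // IH1 big_cons.
    by move=> p; rewrite big_cons.
  apply: (diffat_ext _ (fun p => F i p + \big[Cplus/RtoC 0]_(j <- r) F j p)).
    by move=> p; rewrite big_cons.
  exact: diffat_add.
exact: (proj1 (E _)).
Qed.
End Der.

Lemma pd_isder q d : isder (fun F => pd d F q) q.
Proof.
split.
- move=> F G HF HG; rewrite /Defs.pd; exact: dRC_add.
- move=> F G HF HG; rewrite /Defs.pd dRC_mul // !shift0 //.
- move=> c; exact: dRC_const.
Qed.

Lemma isder_comb (E : finType) (w : E -> C) (del : E -> (pt -> C) -> C) q :
  (forall e, isder (del e) q) -> isder (fun F => csum (fun e => w e * del e F)) q.
Proof.
move=> H; split.
- move=> F G HF HG; rewrite -csum_add; apply: csum_ext => e.
  rewrite (der_add _ _ (H e)) //; ring.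
- move=> F G HF HG; rewrite csum_mulr csum_mull -csum_add; apply: csum_ext => e.
  rewrite (der_mul _ _ (H e)) //; ring.
- move=> c; rewrite -(csum0 E); apply: csum_ext => e; rewrite (der_const _ _ (H e)); ring.
Qed.
Lemma isder_ext (del1 del2 : (pt -> C) -> C) q :
  (forall F, del1 F = del2 F) -> isder del1 q -> isder del2 q.
Proof.
move=> H; have -> : del2 = del1 by apply: functional_extensionality => F; rewrite H. by [].
Qed.
End Calc.
Section VF.
Variable J : nat.
Variable tp : 'I_J -> stype.
Notation pt := (pt J tp).
Variable E : finType.
Variable del : E -> (pt -> C) -> pt -> C.
Definition VF (k : E -> pt -> C) (F : pt -> C) : pt -> C :=
  fun p => csum (fun e => k e p * del e F p).

Variable q : pt.
Hypothesis Hder : forall e, isder J tp (fun G => del e G q) q.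

Lemma VF_isder k : isder J tp (fun G => VF k G q) q.
Proof. exact: (isder_comb J tp E (fun e => k e q) (fun e G => del e G q) q Hder). Qed.

Lemma VF_exp ka kb F :
  (forall e, diffat J tp q (kb e)) -> (forall e, diffat J tp q (del e F)) ->
  VF ka (VF kb F) q = csum (fun e' => VF ka (kb e') q * del e' F q)
    + csum (fun e => csum (fun e' => ka e q * kb e' q * del e (del e' F) q)).
Proof.
move=> Hk HF; rewrite /VF.
transitivity (csum (fun e => csum (fun e' =>
   ka e q * del e (kb e') q * del e' F q + ka e q * kb e' q * del e (del e' F) q))).
  apply: csum_ext => e.
  rewrite (der_sum _ _ _ _ (Hder e)); last by move=> e'; exact: diffat_mul.
  rewrite csum_mull; apply: csum_ext => e'.
  rewrite (der_mul _ _ _ _ (Hder e)) //; ring.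
under csum_ext => e do rewrite csum_add.
rewrite csum_add; congr (_ + _).
rewrite csum_exch; apply: csum_ext => e'; rewrite csum_mulr.
by apply: csum_ext => e''.
Qed.

Lemma VF_comm k1 k2 F :
  (forall e, diffat J tp q (k1 e)) -> (forall e, diffat J tp q (k2 e)) ->
  (forall e, diffat J tp q (del e F)) ->
  (forall e e', del e (del e' F) q = del e' (del e F) q) ->
  VF k1 (VF k2 F) q - VF k2 (VF k1 F) q
  = csum (fun e => (VF k1 (k2 e) q - VF k2 (k1 e) q) * del e F q).
Proof.
move=> H1 H2 HF Hc.
rewrite (VF_exp k1 k2) // (VF_exp k2 k1) //.
have -> : csum (fun e => csum (fun e' => k2 e q * k1 e' q * del e (del e' F) q))
   = csum (fun e => csum (fun e' => k1 e q * k2 e' q * del e (del e' F) q)).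
  rewrite csum_exch; apply: csum_ext => e; apply: csum_ext => e'.
  rewrite Hc; ring.
have -> : forall a b c : C, a + c - (b + c) = a - b by move=> *; ring.
rewrite -csum_sub; apply: csum_ext => e; ring.
Qed.
End VF.
Lemma csum_sig {I : finType} {T : I -> finType} (F : {i : I & T i} -> C) :
  csum F = csum (fun i => csum (fun j => F (existT T i j))).
Proof.
rewrite /csum (sig_big_dep xpredT (fun _ => xpredT) (fun i j => F (existT T i j))).
by apply: eq_bigr => -[i j] _.
Qed.
Lemma csum_sumT {T1 T2 : finType} (F : (T1 + T2)%type -> C) :
  csum F = csum (fun i => F (inl i)) + csum (fun j => F (inr j)).
Proof. by rewrite /csum big_sumType. Qed.

Section Chart.
Variable J : nat.
Variable tp : 'I_J -> stype.
Variable Ups : 'I_4 -> 'I_4 -> ('I_4 -> R) -> R.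
Variable cc : 'I_4 -> 'I_4 -> 'I_4 -> ('I_4 -> R) -> R.
Variable A Ab : 'I_4 -> 'I_2 -> 'I_2 -> pt J tp -> C.
Variable Gam : 'I_4 -> 'I_4 -> 'I_4 -> pt J tp -> C.
Notation pt := (pt J tp).
Notation Dop := (Dop J tp Ups A Ab Gam).
Notation Lj := (Lj J tp A Ab Gam).
Notation Sf := (Sf J tp).
Notation tauSf := (tauSf J tp).
Notation pd := (pd J tp).
Notation dz := (dz J tp).
Notation dzb := (dzb J tp).
Notation mkc := (mkc J tp).

Definition E2 := {P : 'I_J & midx (tp P)}.
Definition E3 := {P : 'I_J & midx (tau_ty (tp P))}.
Definition EE := ('I_4 + (E2 + E3))%type.

Definition delE (e : EE) (F : pt -> C) : pt -> C :=
  match e with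
  | inl k => pd (Defs.Dx J tp k) F
  | inr (inl x) => dz (mkc (tag x) (tagged x)) F
  | inr (inr y) => dzb (mkc (tag y) (swap_idx (tagged y))) F
  end.

Definition kap (i : 'I_4) (e : EE) : pt -> C :=
  match e with
  | inl k => fun p => RtoC (Ups k i p.1)
  | inr (inl x) => fun p => - Lj i (Sf (tag x)) (tagged x) p
  | inr (inr y) => fun p => - Lj i (tauSf (tag y)) (tagged y) p
  end.

Lemma Dop_VF i F q : Dop i F q = VF J tp EE delE (kap i) F q.
Proof.
rewrite /VF csum_sumT csum_sumT !csum_sig /Defs.Dop /=.
rewrite /Cminus -Cplus_A; congr (_ + _); congr (_ + _).
- rewrite csum_opp; apply: csum_ext => P; rewrite csum_opp; apply: csum_ext => I; ring.
- rewrite csum_opp; apply: csum_ext => P; rewrite csum_opp; apply: csum_ext => I; ring.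
Qed.
End Chart.
Section DelE.
Variable J : nat.
Variable tp : 'I_J -> stype.
Notation pt := (pt J tp).
Notation pd := (pd J tp).
Notation diffat := (diffat J tp).

Definition d1 (e : EE J tp) : dir J tp :=
  match e with
  | inl k => Defs.Dx J tp k
  | inr (inl x) => Dre J tp (mkc J tp (tag x) (tagged x))
  | inr (inr y) => Dre J tp (mkc J tp (tag y) (swap_idx (tagged y)))
  end.
Definition d2 (e : EE J tp) : dir J tp :=
  match e with
  | inl k => Defs.Dx J tp k
  | inr (inl x) => Dim J tp (mkc J tp (tag x) (tagged x))
  | inr (inr y) => Dim J tp (mkc J tp (tag y) (swap_idx (tagged y)))
  end.
Definition w1 (e : EE J tp) : C :=
  match e with
  | inl k => RtoC 1
  | inr _ => / RtoC 2
  end.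
Definition w2 (e : EE J tp) : C :=
  match e with
  | inl k => RtoC 0
  | inr (inl _) => - (/ RtoC 2 * Ci)
  | inr (inr _) => / RtoC 2 * Ci
  end.

Lemma delE_form e F q : delE J tp e F q = w1 e * pd (d1 e) F q + w2 e * pd (d2 e) F q.
Proof.
case: e => [k|[x|y]] /=.
- ring.
- rewrite /Defs.dz; ring.
- rewrite /Defs.dzb; ring.
Qed.

Lemma pd_lin2 (d da db : dir J tp) (wa wb : C) F q :
  diffat q (pd da F) -> diffat q (pd db F) ->
  pd d (fun p => wa * pd da F p + wb * pd db F p) q = wa * pd d (pd da F) q + wb * pd d (pd db F) q.
Proof.
move=> Ha Hb.
have H := pd_isder J tp q d.
rewrite (der_add _ _ _ _ H) ?(der_scal _ _ _ _ H) //; exact: diffat_mul (diffat_const _ _ _ _) _.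
Qed.

Definition schwarz_at (q : pt) (F : pt -> C) :=
  forall d d', pd d (pd d' F) q = pd d' (pd d F) q.

Lemma delE_isder e q : isder J tp (fun G => delE J tp e G q) q.
Proof.
apply: (isder_ext _ _ (fun G => w1 e * pd (d1 e) G q + w2 e * pd (d2 e) G q)).
  by move=> G; rewrite delE_form.
have H1 := pd_isder J tp q (d1 e); have H2 := pd_isder J tp q (d2 e).
split.
- move=> F G HF HG; rewrite (der_add _ _ _ _ H1) // (der_add _ _ _ _ H2) //; ring.
- move=> F G HF HG; rewrite (der_mul _ _ _ _ H1) // (der_mul _ _ _ _ H2) //; ring.
- move=> c; rewrite (der_const _ _ _ _ H1) (der_const _ _ _ _ H2); ring.
Qed.

Lemma delE_diffat e F q : (forall d, diffat q (pd d F)) -> diffat q (delE J tp e F).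
Proof.
move=> H; apply: (diffat_ext _ _ _ (fun p => w1 e * pd (d1 e) F p + w2 e * pd (d2 e) F p)).
  by move=> p; rewrite delE_form.
apply: diffat_add; apply: diffat_mul => //; exact: diffat_const.
Qed.

Lemma delE_comm e e' F q : (forall d, diffat q (pd d F)) -> schwarz_at q F ->
  delE J tp e (delE J tp e' F) q = delE J tp e' (delE J tp e F) q.
Proof.
move=> HF HS.
have fe : forall e0, delE J tp e0 F = (fun p => w1 e0 * pd (d1 e0) F p + w2 e0 * pd (d2 e0) F p).
  by move=> e0; apply: functional_extensionality => p; rewrite delE_form.
rewrite !delE_form !fe !pd_lin2 // !(HS (d1 e)) !(HS (d2 e)); ring.
Qed.
End DelE.
Section Schw.
Variable J : nat.
Variable tp : 'I_J -> stype.
Notation pt := (pt J tp).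
Notation pd := (pd J tp).
Notation shift := (shift J tp).
Notation dir := (dir J tp).

Lemma shift_add (p : pt) (d : dir) (u h : R) : shift (shift p d u) d h = shift p d (u + h).
Proof.
case: p => x z; case: d => [k|c|c] /=.
- congr pair; apply: functional_extensionality => l; rewrite /xshift.
  case: eqP => // ->; rewrite ?eqxx; ring.
- congr pair; apply: functional_extensionality => e; rewrite /sshift.
  case: eqP => // ->; rewrite ?eqxx; rewrite /RtoC; apply: injective_projections => /=; ring.
- congr pair; apply: functional_extensionality => e; rewrite /sshift.
  case: eqP => // ->; rewrite ?eqxx; apply: injective_projections => /=; ring.
Qed.

Lemma shift_comm (p : pt) (a b : dir) (u v : R) :
  shift (shift p a u) b v = shift (shift p b v) a u.
Proof.
case: p => x z; case: a => [k|c|c]; case: b => [k'|c'|c'] /=; congr pair;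
  apply: functional_extensionality => l; rewrite /xshift /sshift;
  repeat case: eqP => //; try (move=> *; subst; ring); try (move=> *; subst;
  apply: injective_projections => /=; ring).
Qed.
End Schw.
Section Schw2.
Variable J : nat.
Variable tp : 'I_J -> stype.
Notation pt := (pt J tp).
Notation shift := (shift J tp).
Notation dir := (dir J tp).

Lemma ballR (x y : R) (e : R) : Rabs (Rminus y x) < e -> ball x e y.
Proof. by []. Qed.

Lemma ball_shift (p : pt) (d : dir) (e : posreal) (s : R) :
  Rabs s < e -> ball p e (shift p d s).
Proof.
move=> Hs; have He : Rabs (Rminus (Rplus R0 R0) R0) < e.
  rewrite (_ : Rminus (Rplus R0 R0) R0 = R0) ?Rabs_R0; [exact: cond_pos | ring].
case: p => x z; case: d => [k|c|c]; split => /=.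
- move=> l; rewrite /xshift; case: eqP => _; last exact: ball_center.
  apply: ballR; by rewrite (_ : Rminus (Rplus (x l) s) (x l) = s) //; ring.
- exact: ball_center.
- exact: ball_center.
- move=> l; rewrite /sshift; case: eqP => _; last exact: ball_center.
  split => /=; apply: ballR.
    by rewrite (_ : Rminus (Rplus (z l).1 s) (z l).1 = s) //; ring.
  rewrite (_ : Rminus (Rplus (z l).2 R0) (z l).2 = R0) ?Rabs_R0; [exact: cond_pos | ring].
- exact: ball_center.
- move=> l; rewrite /sshift; case: eqP => _; last exact: ball_center.
  split => /=; apply: ballR.
    rewrite (_ : Rminus (Rplus (z l).1 R0) (z l).1 = R0) ?Rabs_R0; [exact: cond_pos | ring].
  by rewrite (_ : Rminus (Rplus (z l).2 s) (z l).2 = s) //; ring.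
Qed.
End Schw2.
Lemma Derive_tr (g : R -> R) u : Derive g u = Derive (fun h => g (Rplus u h)) R0.
Proof.
rewrite /Derive; congr real; apply: Lim_ext => h.
by rewrite Rplus_0_l Rplus_0_r.
Qed.
Lemma ex_derive_tr (g : R -> R) u : ex_derive (fun h => g (Rplus u h)) R0 -> ex_derive g u.
Proof.
move=> H.
have -> : g = (fun z => (fun h => g (Rplus u h)) (Rminus z u)).
  apply: functional_extensionality => z /=; congr g.
  by rewrite /Rminus (Rplus_comm z) -Rplus_assoc Rplus_opp_r Rplus_0_l.
apply: (ex_derive_comp (fun h => g (Rplus u h)) (fun z => Rminus z u)).
  by rewrite /Rminus Rplus_opp_r.
apply: ex_derive_minus; [exact: ex_derive_id | exact: ex_derive_const].
Qed.
Section Schw3.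
Variable J : nat.
Variable tp : 'I_J -> stype.
Notation pt := (pt J tp).
Notation shift := (shift J tp).
Notation dir := (dir J tp).
Notation pd := (pd J tp).

Variable pi : C -> R.
Hypothesis Hd : forall f : R -> C, pi (dRC f) = Derive (fun s => pi (f s)) R0.
Hypothesis He : forall f : R -> C, exRC f -> ex_derive (fun s => pi (f s)) R0.
Hypothesis Hb : forall (x y : C) (e : R), ball x e y -> Rabs (Rminus (pi y) (pi x)) < e.

Lemma D1 (G : pt -> C) (p : pt) (d : dir) (u : R) :
  Derive (fun z => pi (G (shift p d z))) u = pi (pd d G (shift p d u)).
Proof.
rewrite Derive_tr /Defs.pd Hd; congr Derive; apply: functional_extensionality => h.
by rewrite shift_add.
Qed.
Lemma E1 (G : pt -> C) (p : pt) (d : dir) (u : R) :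
  exRC (fun s => G (shift (shift p d u) d s)) -> ex_derive (fun z => pi (G (shift p d z))) u.
Proof.
move=> H; apply: ex_derive_tr.
have := He _ H; congr ex_derive; apply: functional_extensionality => h.
by rewrite shift_add.
Qed.

Lemma schwarz_pi (Ux : ('I_4 -> R) -> Prop) F q (a b : dir) :
  open Ux -> smooth_on J tp (fun p => Ux p.1) F -> Ux q.1 ->
  pi (pd a (pd b F) q) = pi (pd b (pd a F) q).
Proof.
move=> HU HF Hq.
have [eps Heps] := HU _ Hq.
pose e2 := pos_div_2 eps.
pose P u v := shift (shift q a u) b v.
have ballP : forall (e : posreal) u v, Rabs u < pos_div_2 e -> Rabs v < pos_div_2 e -> ball q e (P u v).
  move=> e u v Hu Hv.
  have H := ball_triangle _ _ _ _ _ (ball_shift J tp q a _ u Hu) (ball_shift J tp (shift q a u) b _ v Hv).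
  have Ee : Rplus (pos_div_2 e) (pos_div_2 e) = pos e by rewrite /= -double_var.
  by rewrite Ee in H.
have inP : forall u v, Rabs u < e2 -> Rabs v < e2 -> Ux (P u v).1.
  move=> u v Hu Hv; apply: Heps; by case: (ballP eps u v Hu Hv).
have P00 : P R0 R0 = q by rewrite /P !shift0.
pose fr u v := pi (F (P u v)).
have I1 : forall z v, Derive (fun t => fr z t) v = pi (pd b F (P z v)).
  move=> z v; exact: (D1 F (shift q a z) b v).
have I2 : forall z u, Derive (fun t => fr t z) u = pi (pd a F (P u z)).
  move=> z u; rewrite /fr /P.
  rewrite (_ : (fun t => pi (F (shift (shift q a t) b z))) = (fun t => pi (F (shift (shift q b z) a t)))).
    by rewrite D1 shift_comm.
  apply: functional_extensionality => t; by rewrite shift_comm.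
have M1 : forall u v, Derive (fun z => Derive (fun t => fr z t) v) u = pi (pd a (pd b F) (P u v)).
  move=> u v; rewrite (_ : (fun z => Derive (fun t => fr z t) v) = (fun z => pi (pd b F (shift (shift q b v) a z)))).
    by rewrite D1 /P shift_comm.
  apply: functional_extensionality => z; by rewrite I1 /P shift_comm.
have M2 : forall u v, Derive (fun z => Derive (fun t => fr t z) u) v = pi (pd b (pd a F) (P u v)).
  move=> u v; rewrite (_ : (fun z => Derive (fun t => fr t z) u) = (fun z => pi (pd a F (shift (shift q a u) b z)))).
    by rewrite D1.
  apply: functional_extensionality => z; by rewrite I2.
have cont : forall G : pt -> C, continuous G q ->
    continuity_2d_pt (fun u v => pi (G (P u v))) R0 R0.
  move=> G HG e.
  have := proj1 (filterlim_locally G (G q)) HG e.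
  move=> [del Hdel].
  exists (pos_div_2 del) => u v Hu Hv.
  rewrite P00; apply: Hb; apply: Hdel; apply: ballP.
    by rewrite (_ : u = Rminus u R0) //; ring.
  by rewrite (_ : v = Rminus v R0) //; ring.
rewrite -P00 -M1 -M2.
apply: Schwarz.
- exists e2 => u v Hu Hv.
  rewrite (_ : Rminus u R0 = u) in Hu; last ring.
  rewrite (_ : Rminus v R0 = v) in Hv; last ring.
  have Hin := inP u v Hu Hv.
  have [_ HF0] := HF [::] (P u v) Hin.
  have [_ HFa] := HF [:: a] (P u v) Hin.
  have [_ HFb] := HF [:: b] (P u v) Hin.
  split; [|split; [|split]].
  + rewrite /fr /P.
    rewrite (_ : (fun z => pi (F (shift (shift q a z) b v))) = (fun z => pi (F (shift (shift q b v) a z)))).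
      apply: E1; by rewrite -shift_comm.
    apply: functional_extensionality => z; by rewrite shift_comm.
  + apply: E1; exact: HF0.
  + rewrite (_ : (fun z => Derive (fun t => fr z t) v) = (fun z => pi (pd b F (shift (shift q b v) a z)))).
      apply: E1; rewrite -shift_comm; exact: HFb.
    apply: functional_extensionality => z; by rewrite I1 /P shift_comm.
  + rewrite (_ : (fun z => Derive (fun t => fr t z) u) = (fun z => pi (pd a F (shift (shift q a u) b z)))).
      apply: E1; exact: HFa.
    apply: functional_extensionality => z; by rewrite I2.
- have E : (fun u v => Derive (fun z => Derive (fun t => fr z t) v) u) = (fun u v => pi (pd a (pd b F) (P u v))).
    do 2 (apply: functional_extensionality => ?); exact: M1.
  rewrite E; apply: cont; exact: (proj1 (HF [:: a; b] q Hq)).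
- have E : (fun u v => Derive (fun z => Derive (fun t => fr t z) u) v) = (fun u v => pi (pd b (pd a F) (P u v))).
    do 2 (apply: functional_extensionality => ?); exact: M2.
  rewrite E; apply: cont; exact: (proj1 (HF [:: b; a] q Hq)).
Qed.
End Schw3.
Section SmoothFacts.
Variable J : nat.
Variable tp : 'I_J -> stype.
Variable Ux : ('I_4 -> R) -> Prop.
Hypothesis HU : open Ux.

Lemma smooth_schwarz F q : smooth_on J tp (fun p => Ux p.1) F -> Ux q.1 ->
  schwarz_at J tp q F.
Proof.
move=> HF Hq d d'; apply: injective_projections.
- have Hd2 : forall f : R -> C, fst (dRC f) = Derive (fun s => fst (f s)) R0 by [].
  have He2 : forall f : R -> C, exRC f -> ex_derive (fun s => fst (f s)) R0 by move=> f [].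
  have Hb2 : forall (x y : C) (e : R), ball x e y -> Rabs (Rminus (fst y) (fst x)) < e by move=> x y e [].
  exact: (schwarz_pi J tp fst Hd2 He2 Hb2 Ux F q d d' HU HF Hq).
- have Hd2 : forall f : R -> C, snd (dRC f) = Derive (fun s => snd (f s)) R0 by [].
  have He2 : forall f : R -> C, exRC f -> ex_derive (fun s => snd (f s)) R0 by move=> f [].
  have Hb2 : forall (x y : C) (e : R), ball x e y -> Rabs (Rminus (snd y) (snd x)) < e by move=> x y e [].
  exact: (schwarz_pi J tp snd Hd2 He2 Hb2 Ux F q d d' HU HF Hq).
Qed.
Lemma smooth_diffat F q : smooth_on J tp (fun p => Ux p.1) F -> Ux q.1 -> diffat J tp q F.
Proof. move=> HF Hq; exact: (proj2 (HF [::] q Hq)). Qed.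
Lemma smooth_diffat_pd F q d : smooth_on J tp (fun p => Ux p.1) F -> Ux q.1 ->
  diffat J tp q (pd J tp d F).
Proof. move=> HF Hq; exact: (proj2 (HF [:: d] q Hq)). Qed.
End SmoothFacts.
Section LfCalc.
Variable J : nat.
Variable tp : 'I_J -> stype.
Notation pt := (pt J tp).
Notation diffat := (diffat J tp).
Variable q : pt.
Variable t : stype.

Lemma diffat_Kop {n} {T : finType} get set (M : pt -> T -> T -> C) (Z : midx t -> pt -> C) I :
  (forall x y, diffat q (fun p => M p x y)) -> (forall J, diffat q (Z J)) ->
  diffat q (fun p => @Kop t n T get set (M p) (fun J => Z J p) I).
Proof.
move=> HM HZ; rewrite /Kop.
apply: diffat_sum => mu; apply: diffat_sum => v; apply: diffat_mul; [exact: HM | exact: HZ].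
Qed.

Lemma der_Kop (del : (pt -> C) -> C) {n} {T : finType} get set (M : pt -> T -> T -> C)
  (Z : midx t -> pt -> C) I :
  isder J tp del q ->
  (forall x y, diffat q (fun p => M p x y)) -> (forall J, diffat q (Z J)) ->
  del (fun p => @Kop t n T get set (M p) (fun J => Z J p) I)
  = Kop t get set (fun x y => del (fun p => M p x y)) (fun J => Z J q) I
  + Kop t get set (M q) (fun J => del (Z J)) I.
Proof.
move=> Hd HM HZ; rewrite /Kop.
rewrite (der_sum _ _ _ _ Hd); last first.
  move=> mu; apply: diffat_sum => v; apply: diffat_mul; [exact: HM | exact: HZ].
rewrite -csum_add; apply: csum_ext => mu.
rewrite (der_sum _ _ _ _ Hd); last first.
  move=> v; apply: diffat_mul; [exact: HM | exact: HZ].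
rewrite -csum_add; apply: csum_ext => v.
by rewrite (der_mul _ _ _ _ Hd).
Qed.

Lemma LfE a b g (Z : midx t -> pt -> C) I p :
  Lf J tp a b g Z I p = Lop' t (fun k i => a k i p) (fun k i => b k i p) (fun k i => g k i p) (fun J => Z J p) I.
Proof. by rewrite /Lf Lop_K. Qed.

Lemma diffat_tr {T : Type} (M : pt -> T -> T -> C) x y :
  diffat q (fun p => M p y x) -> diffat q (fun p => tr (M p) x y).
Proof. move=> H; exact: diffat_opp. Qed.

Lemma diffat_Lf a b g (Z : midx t -> pt -> C) I :
  (forall k l, diffat q (a k l)) -> (forall k l, diffat q (b k l)) ->
  (forall k l, diffat q (g k l)) -> (forall J, diffat q (Z J)) ->
  diffat q (Lf J tp a b g Z I).
Proof.
move=> Ha Hb Hg HZ.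
apply: (diffat_ext _ _ _ (fun p => Lop' t (fun k i => a k i p) (fun k i => b k i p) (fun k i => g k i p) (fun J => Z J p) I)).
  by move=> p; rewrite LfE.
rewrite /Lop'.
repeat apply: diffat_add; apply: diffat_Kop => // x y;
  first [exact: Ha | exact: Hb | exact: Hg | apply: diffat_tr; first [exact: Ha | exact: Hb | exact: Hg]].
Qed.

Lemma der_Lf (del : (pt -> C) -> C) a b g (Z : midx t -> pt -> C) I :
  isder J tp del q ->
  (forall k l, diffat q (a k l)) -> (forall k l, diffat q (b k l)) ->
  (forall k l, diffat q (g k l)) -> (forall J, diffat q (Z J)) ->
  del (Lf J tp a b g Z I)
  = Lop (fun k i => del (a k i)) (fun k i => del (b k i)) (fun k i => del (g k i)) (fun J => Z J q) I
  + Lop (fun k i => a k i q) (fun k i => b k i q) (fun k i => g k i q) (fun J => del (Z J)) I.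
Proof.
move=> Hd Ha Hb Hg HZ.
have dK : forall {n} {T : finType} get set (M : pt -> T -> T -> C),
    (forall x y, diffat q (fun p => M p x y)) ->
    diffat q (fun p => @Kop t n T get set (M p) (fun J => Z J p) I).
  by move=> n T get set M HM; apply: diffat_Kop.
have dtr : forall {T : Type} (M : pt -> T -> T -> C), (forall x y, diffat q (fun p => M p x y)) ->
    forall x y, diffat q (fun p => tr (M p) x y).
  by move=> T M HM x y; apply: diffat_tr.
rewrite (der_ext _ _ _ _ (fun p => Lop' t (fun k i => a k i p) (fun k i => b k i p) (fun k i => g k i p) (fun J => Z J p) I)); last first.
  by move=> p; rewrite LfE.
rewrite /Lop'.
rewrite !(der_add _ _ _ _ Hd); try (repeat apply: diffat_add; apply: dK;
  first [exact: Ha | exact: Hb | exact: Hg | apply: dtr; first [exact: Ha | exact: Hb | exact: Hg]]).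
rewrite !(der_Kop del _ _ _ _ _ Hd) //; try (move=> x y;
  first [exact: Ha | exact: Hb | exact: Hg | apply: dtr; first [exact: Ha | exact: Hb | exact: Hg]]).
rewrite !Lop_K /Lop'.
have trd : forall {T : Type} (M : T -> T -> pt -> C), (forall x y, diffat q (M x y)) ->
    forall x y, del (fun p => tr (fun k i => M k i p) x y) = tr (fun k i => del (M k i)) x y.
  move=> T M HM x y; rewrite /tr (der_opp _ _ _ _ Hd) //.
rewrite (Kop_extM _ _ _ (fun x y => del (fun p => tr (fun k i => a k i p) x y)) (tr (fun k i => del (a k i)))); last by move=> x y; exact: trd.
rewrite (Kop_extM _ _ _ (fun x y => del (fun p => tr (fun k i => b k i p) x y)) (tr (fun k i => del (b k i)))); last by move=> x y; exact: trd.
rewrite (Kop_extM _ _ _ (fun x y => del (fun p => tr (fun k i => g k i p) x y)) (tr (fun k i => del (g k i)))); last by move=> x y; exact: trd.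
kring.
Qed.
End LfCalc.
Lemma Ci2 : Ci * Ci = - RtoC 1.
Proof. apply: injective_projections => /=; ring. Qed.
Lemma two_neq0 : RtoC 2 <> RtoC 0.
Proof.
move=> [] H; have : Rlt R0 2 by apply: Rlt_0_2.
by rewrite H => /Rlt_irrefl.
Qed.
Lemma half2 : / RtoC 2 * (RtoC 1 + RtoC 1) = RtoC 1.
Proof. field; exact: two_neq0. Qed.
Lemma hCi1 : / RtoC 2 * (RtoC 1 - Ci * Ci) = RtoC 1.
Proof. rewrite Ci2 -{3}half2; ring. Qed.
Lemma hCi0 : / RtoC 2 * (RtoC 1 + Ci * Ci) = RtoC 0.
Proof. rewrite Ci2; ring. Qed.

Section Coord.
Variable J : nat.
Variable tp : 'I_J -> stype.
Notation pt := (pt J tp).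
Notation pd := (pd J tp).
Notation diffat := (diffat J tp).

Definition coord (c : coordT J tp) : pt -> C := fun p => p.2 c.

Lemma Derive_affine (a : R) : Derive (fun s => Rplus a s) R0 = R1.
Proof.
rewrite Derive_plus; [|exact: ex_derive_const|exact: ex_derive_id].
by rewrite Derive_const Derive_id Rplus_0_l.
Qed.
Lemma ex_derive_affine (a : R) : ex_derive (fun s => Rplus a s) R0.
Proof. apply: ex_derive_plus; [exact: ex_derive_const|exact: ex_derive_id]. Qed.

Lemma pd_coord_x c k q : pd (Defs.Dx J tp k) (coord c) q = RtoC 0.
Proof. by rewrite /Defs.pd /coord /= dRC_const. Qed.
Lemma pd_coord_re c c' q : pd (Dre J tp c') (coord c) q = if c == c' then RtoC 1 else RtoC 0.
Proof.
rewrite /Defs.pd /coord /= /sshift; case: eqP => _; last by rewrite dRC_const.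
rewrite /dRC /= Derive_affine Derive_const //.
Qed.
Lemma pd_coord_im c c' q : pd (Dim J tp c') (coord c) q = if c == c' then Ci else RtoC 0.
Proof.
rewrite /Defs.pd /coord /= /sshift; case: eqP => _; last by rewrite dRC_const.
rewrite /dRC /= Derive_affine Derive_const //.
Qed.
Lemma diffat_coord c q : diffat q (coord c).
Proof.
case=> [k|c'|c']; rewrite /coord /=.
- exact: exRC_const.
- rewrite /sshift; case: eqP => _; last exact: exRC_const.
  split => /=; [exact: ex_derive_affine | exact: ex_derive_const].
- rewrite /sshift; case: eqP => _; last exact: exRC_const.
  split => /=; [exact: ex_derive_const | exact: ex_derive_affine].
Qed.
Lemma pd_conj d (G : pt -> C) q : pd d (fun p => Cconj (G p)) q = Cconj (pd d G q).
Proof. by rewrite /Defs.pd dRC_conj. Qed.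

Lemma dz_coord c c' q : dz J tp c' (coord c) q = if c == c' then RtoC 1 else RtoC 0.
Proof.
rewrite /Defs.dz pd_coord_re pd_coord_im; case: eqP => _.
  exact: hCi1.
ring.
Qed.
Lemma dzb_coord c c' q : dzb J tp c' (coord c) q = RtoC 0.
Proof.
rewrite /Defs.dzb pd_coord_re pd_coord_im; case: eqP => _.
  exact: hCi0.
ring.
Qed.
Lemma dz_ccoord c c' q : dz J tp c' (fun p => Cconj (coord c p)) q = RtoC 0.
Proof.
rewrite /Defs.dz !pd_conj pd_coord_re pd_coord_im; case: eqP => _.
  have -> : Cconj Ci = - Ci by apply: injective_projections => /=; ring.
  have -> : Cconj (RtoC 1) = RtoC 1 by apply: injective_projections => /=; ring.
  rewrite (_ : RtoC 1 - Ci * - Ci = RtoC 1 + Ci * Ci); last ring.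
  exact: hCi0.
have -> : Cconj (RtoC 0) = RtoC 0 by apply: injective_projections => /=; ring.
ring.
Qed.
Lemma dzb_ccoord c c' q : dzb J tp c' (fun p => Cconj (coord c p)) q = if c == c' then RtoC 1 else RtoC 0.
Proof.
rewrite /Defs.dzb !pd_conj pd_coord_re pd_coord_im; case: eqP => _.
  have -> : Cconj Ci = - Ci by apply: injective_projections => /=; ring.
  have -> : Cconj (RtoC 1) = RtoC 1 by apply: injective_projections => /=; ring.
  rewrite (_ : RtoC 1 + Ci * - Ci = RtoC 1 - Ci * Ci); last ring.
  exact: hCi1.
have -> : Cconj (RtoC 0) = RtoC 0 by apply: injective_projections => /=; ring.
ring.
Qed.
End Coord.
Lemma Kop_scaleX t {n} {T : finType} get set (M : T -> T -> C) (c : C) X I :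
  @Kop t n T get set M (fun J => c * X J) I = c * Kop t get set M X I.
Proof.
rewrite /Kop csum_mull; apply: csum_ext => mu; rewrite csum_mull.
apply: csum_ext => v; ring.
Qed.
Lemma Lop_scaleX t a b g (c : C) (X : midx t -> C) I :
  Lop a b g (fun J => c * X J) I = c * Lop a b g X I.
Proof. rewrite !Lop_K /Lop' !Kop_scaleX; kring. Qed.
Lemma Lop_oppX t a b g (X : midx t -> C) I :
  Lop a b g (fun J => - X J) I = - Lop a b g X I.
Proof.
rewrite (Lop_extX _ _ _ _ _ (fun J => RtoC (-1) * X J)); last by move=> J; ring.
rewrite Lop_scaleX; ring.
Qed.
Lemma RtoC_rsumo n (F : 'I_n -> R) : RtoC (rsumo F) = csumo (fun i => RtoC (F i)).
Proof.
rewrite /rsumo /csumo; apply: (big_morph RtoC) => //.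
by move=> x y; rewrite RtoC_plus.
Qed.

Definition swap_inv_def t (I : midx t) : midx (tau_ty t) :=
  @mk (tau_ty t) (ic I) (id' I) (ia I) (ib I) (ie I) (if' I).
Lemma swap_invK t (I : midx (tau_ty t)) : swap_inv_def t (swap_idx I) = I.
Proof. by case: I => [[[[[? ?] ?] ?] ?] ?]. Qed.

Lemma swap_eq J tp (P P' : 'I_J) (I : midx (tau_ty (tp P))) (I' : midx (tau_ty (tp P'))) :
  (mkc J tp P (swap_idx I) == mkc J tp P' (swap_idx I'))
  = (existT (fun P0 => midx (tau_ty (tp P0))) P I == existT _ P' I').
Proof.
apply/eqP/eqP => H.
- have := f_equal (fun s : coordT J tp => existT (fun P0 => midx (tau_ty (tp P0))) (tag s) (swap_inv_def _ (tagged s))) H.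
  by rewrite /= !swap_invK.
- have := f_equal (fun s : E3 J tp => mkc J tp (tag s) (swap_idx (tagged s))) H.
  by [].
Qed.
Section Main.
Variable J : nat.
Variable tp : 'I_J -> stype.
Variable Ux : ('I_4 -> R) -> Prop.
Variable Ups : 'I_4 -> 'I_4 -> ('I_4 -> R) -> R.
Variable cc : 'I_4 -> 'I_4 -> 'I_4 -> ('I_4 -> R) -> R.
Variable A Ab : 'I_4 -> 'I_2 -> 'I_2 -> pt J tp -> C.
Variable Gam : 'I_4 -> 'I_4 -> 'I_4 -> pt J tp -> C.
Hypothesis HU : open Ux.
Hypothesis Hbr : bracket_rel Ux Ups cc.
Hypothesis HUps : forall k i, smooth_on J tp (fun q => Ux q.1) (fun q => RtoC (Ups k i q.1)).
Hypothesis HA : forall j k i, smooth_on J tp (fun q => Ux q.1) (A j k i).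
Hypothesis HAb : forall j k i, smooth_on J tp (fun q => Ux q.1) (Ab j k i).
Hypothesis HGam : forall j k i, smooth_on J tp (fun q => Ux q.1) (Gam j k i).
Variable q : pt J tp.
Hypothesis Hq : Ux q.1.

Notation pt := (pt J tp).
Notation Dop := (Dop J tp Ups A Ab Gam).
Notation Lj := (Lj J tp A Ab Gam).
Notation Sf := (Sf J tp).
Notation tauSf := (tauSf J tp).
Notation pd := (pd J tp).
Notation diffat := (diffat J tp).
Notation smooth := (smooth_on J tp (fun p => Ux p.1)).
Notation kap := (kap J tp Ups A Ab Gam).
Notation delE := (delE J tp).
Notation VF := (VF J tp (EE J tp) delE).

Lemma dUps k i : diffat q (fun p => RtoC (Ups k i p.1)).
Proof. exact: (smooth_diffat J tp Ux). Qed.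
Lemma dA j k i : diffat q (A j k i). Proof. exact: (smooth_diffat J tp Ux). Qed.
Lemma dAb j k i : diffat q (Ab j k i). Proof. exact: (smooth_diffat J tp Ux). Qed.
Lemma dGam j k i : diffat q (Gam j k i). Proof. exact: (smooth_diffat J tp Ux). Qed.
Lemma dSf P I : diffat q (Sf P I). Proof. exact: diffat_coord. Qed.
Lemma dtSf P I : diffat q (tauSf P I).
Proof. apply: diffat_conj; exact: diffat_coord. Qed.
Lemma dLj t (Z : field J tp t) i I : (forall I', diffat q (Z I')) -> diffat q (Lj i Z I).
Proof.
move=> HZ; apply: diffat_Lf => // k l; [exact: dA|exact: dAb|exact: dGam].
Qed.
Lemma dkap i e : diffat q (kap i e).
Proof.
case: e => [k|[x|y]] /=.
- exact: dUps.
- apply: diffat_opp; apply: dLj => I'; exact: dSf.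
- apply: diffat_opp; apply: dLj => I'; exact: dtSf.
Qed.

Lemma DopE i F : Dop i F = VF (kap i) F.
Proof. apply: functional_extensionality => p; exact: Dop_VF. Qed.

Lemma Dop_isder i : isder J tp (fun F => Dop i F q) q.
Proof.
apply: (isder_ext J tp (fun F => VF (kap i) F q)); first by move=> F; rewrite DopE.
apply: VF_isder => e; exact: delE_isder.
Qed.

Lemma dpd F d : smooth F -> diffat q (pd d F).
Proof. move=> HF; exact: (smooth_diffat_pd J tp Ux). Qed.

Lemma dDop i F : smooth F -> diffat q (Dop i F).
Proof.
move=> HF; rewrite DopE /VF; apply: diffat_sum => e; apply: diffat_mul.
  exact: dkap.
apply: delE_diffat => d; exact: dpd.
Qed.

Lemma Dop_comm0 i j F : smooth F ->
  Dop i (Dop j F) q - Dop j (Dop i F) q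
  = csum (fun e => (Dop i (kap j e) q - Dop j (kap i e) q) * delE e F q).
Proof.
move=> HF.
under csum_ext => e do rewrite !DopE.
rewrite !DopE.
apply: VF_comm.
- move=> e; exact: delE_isder.
- move=> e; exact: dkap.
- move=> e; exact: dkap.
- move=> e; apply: delE_diffat => d; exact: dpd.
- move=> e e'; apply: delE_comm.
    move=> d; exact: dpd.
  exact: (smooth_schwarz J tp Ux).
Qed.

Lemma Dop_Sf i P I : Dop i (Sf P I) q = - Lj i (Sf P) I q.
Proof.
rewrite Dop_VF /VF csum_sumT csum_sumT /=.
rewrite (_ : csum _ = RtoC 0); last first.
  rewrite -(csum0 'I_4); apply: csum_ext => k; rewrite (pd_coord_x J tp (mkc J tp P I)); ring.
rewrite (_ : csum (fun j : E3 J tp => _) = RtoC 0); last first.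
  rewrite -(csum0 (E3 J tp)); apply: csum_ext => y.
  rewrite (dzb_coord J tp (mkc J tp P I)); ring.
rewrite (_ : csum _ = csum (fun x : E2 J tp => if mkc J tp P I == x then - Lj i (Sf (tag x)) (tagged x) q else RtoC 0)).
  rewrite csum_delta' /=; ring.
apply: csum_ext => -[P' I'] /=.
rewrite (dz_coord J tp (mkc J tp P I)); case: eqP => _; ring.
Qed.

Lemma Dop_tSf i P I : Dop i (tauSf P I) q = - Lj i (tauSf P) I q.
Proof.
rewrite Dop_VF /VF csum_sumT csum_sumT /=.
rewrite (_ : csum _ = RtoC 0); last first.
  rewrite -(csum0 'I_4); apply: csum_ext => k.
  rewrite /Defs.tauSf (pd_conj J tp) (pd_coord_x J tp (mkc J tp P (swap_idx I))).
  have -> : Cconj (RtoC 0) = RtoC 0 by apply: injective_projections => /=; ring.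
  ring.
rewrite (_ : csum (fun j : E2 J tp => _) = RtoC 0); last first.
  rewrite -(csum0 (E2 J tp)); apply: csum_ext => y.
  rewrite /Defs.tauSf (dz_ccoord J tp (mkc J tp P (swap_idx I))); ring.
rewrite (_ : csum _ = csum (fun y : E3 J tp =>
   if existT (fun P0 => midx (tau_ty (tp P0))) P I == y then - Lj i (tauSf (tag y)) (tagged y) q else RtoC 0)).
  rewrite csum_delta' /=; ring.
apply: csum_ext => -[P' I'] /=.
rewrite /Defs.tauSf (dzb_ccoord J tp (mkc J tp P (swap_idx I))) swap_eq; case: eqP => _; ring.
Qed.

Lemma Dop_Ups i k j :
  Dop i (fun p => RtoC (Ups k j p.1)) q
  = RtoC (rsumo (fun l => Rmult (Ups l i q.1) (Derive (fun s => Ups k j (xshift q.1 l s)) R0))).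
Proof.
rewrite Dop_VF /VF csum_sumT csum_sumT /=.
have z2 : csum (fun x : E2 J tp => - Lj i (Sf (tag x)) (tagged x) q *
     dz J tp (mkc J tp (tag x) (tagged x)) (fun p => RtoC (Ups k j p.1)) q) = RtoC 0.
  rewrite -(csum0 (E2 J tp)); apply: csum_ext => x.
  rewrite /Defs.dz /Defs.pd /= !dRC_const; ring.
have z3 : csum (fun y : E3 J tp => - Lj i (tauSf (tag y)) (tagged y) q *
     dzb J tp (mkc J tp (tag y) (swap_idx (tagged y))) (fun p => RtoC (Ups k j p.1)) q) = RtoC 0.
  rewrite -(csum0 (E3 J tp)); apply: csum_ext => x.
  rewrite /Defs.dzb /Defs.pd /= !dRC_const; ring.
rewrite z2 z3 RtoC_rsumo csumoE Cplus_0_r' Cplus_0_r'; apply: csum_ext => l.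
rewrite RtoC_mult; congr (_ * _).
rewrite /Defs.pd /dRC /= Derive_const //.
Qed.

Lemma bracketC i j k :
  Dop i (fun p => RtoC (Ups k j p.1)) q - Dop j (fun p => RtoC (Ups k i p.1)) q
  = csumo (fun m => RtoC (cc m i j q.1) * RtoC (Ups k m q.1)).
Proof.
rewrite !Dop_Ups !RtoC_rsumo !csumoE -csum_sub.
have H := Hbr q.1 Hq i j k.
transitivity (RtoC (rsumo (fun l => Rminus (Rmult (Ups l i q.1) (Derive (fun s => Ups k j (xshift q.1 l s)) R0))
   (Rmult (Ups l j q.1) (Derive (fun s => Ups k i (xshift q.1 l s)) R0))))).
  rewrite RtoC_rsumo; apply: csum_ext => l; by rewrite RtoC_minus.
rewrite H RtoC_rsumo; apply: csum_ext => m; by rewrite RtoC_mult.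
Qed.

Notation Rcf B i j := (fun p r => Rc J tp Ups cc A Ab Gam B p r i j q).

Lemma Lop_Rc t (X : midx t -> C) I i j :
  Lop (Rcf A i j) (Rcf Ab i j) (Rcf Gam i j) X I
  = Lop (fun p r => Dop i (A j p r) q) (fun p r => Dop i (Ab j p r) q) (fun p r => Dop i (Gam j p r) q) X I
  - Lop (fun p r => Dop j (A i p r) q) (fun p r => Dop j (Ab i p r) q) (fun p r => Dop j (Gam i p r) q) X I
  + Lop (brk (fun x y => A i x y q) (fun x y => A j x y q)) (brk (fun x y => Ab i x y q) (fun x y => Ab j x y q))
        (brk (fun x y => Gam i x y q) (fun x y => Gam j x y q)) X I
  - csumo (fun m => RtoC (cc m i j q.1) * Lop (fun x y => A m x y q) (fun x y => Ab m x y q) (fun x y => Gam m x y q) X I).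
Proof.
rewrite (Lop_extM _ _ _ _
  (fun x y => (Dop i (A j x y) q - Dop j (A i x y) q + brk (fun x y => A i x y q) (fun x y => A j x y q) x y)
       - csum (fun m => RtoC (cc m i j q.1) * A m x y q))
  (fun x y => (Dop i (Ab j x y) q - Dop j (Ab i x y) q + brk (fun x y => Ab i x y q) (fun x y => Ab j x y q) x y)
       - csum (fun m => RtoC (cc m i j q.1) * Ab m x y q))
  (fun x y => (Dop i (Gam j x y) q - Dop j (Gam i x y) q + brk (fun x y => Gam i x y q) (fun x y => Gam j x y q) x y)
       - csum (fun m => RtoC (cc m i j q.1) * Gam m x y q))); try by [].
by rewrite Lop_subM Lop_addM Lop_subM Lop_sumM.
Qed.

Lemma Dop_Lf i j t (Z : field J tp t) I : (forall I', diffat q (Z I')) ->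
  Dop i (Lj j Z I) q
  = Lop (fun k l => Dop i (A j k l) q) (fun k l => Dop i (Ab j k l) q) (fun k l => Dop i (Gam j k l) q) (fun J0 => Z J0 q) I
  + Lop (fun k l => A j k l q) (fun k l => Ab j k l q) (fun k l => Gam j k l q) (fun J0 => Dop i (Z J0) q) I.
Proof.
move=> HZ.
exact: (der_Lf J tp q t (fun F => Dop i F q) (A j) (Ab j) (Gam j) Z I (Dop_isder i)
  (dA j) (dAb j) (dGam j) HZ).
Qed.

Lemma kap_gen t (S : field J tp t) i j I :
  (forall i' I', Dop i' (S I') q = - Lj i' S I' q) -> (forall I', diffat q (S I')) ->
  Dop i (fun p => - Lj j S I p) q - Dop j (fun p => - Lj i S I p) q
  = csumo (fun m => RtoC (cc m i j q.1) * (- Lj m S I q))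
    - Lop (Rcf A i j) (Rcf Ab i j) (Rcf Gam i j) (fun J0 => S J0 q) I.
Proof.
move=> HS dS.
rewrite (der_opp _ _ _ _ (Dop_isder i)); last exact: dLj.
rewrite (der_opp _ _ _ _ (Dop_isder j)); last exact: dLj.
rewrite !Dop_Lf //.
rewrite (Lop_extX _ _ _ _ (fun J0 => Dop i (S J0) q)
   (fun J0 => - Lop (fun k l => A i k l q) (fun k l => Ab i k l q) (fun k l => Gam i k l q) (fun J0 => S J0 q) J0));
  last by move=> J0; rewrite HS.
rewrite (Lop_extX _ _ _ _ (fun J0 => Dop j (S J0) q)
   (fun J0 => - Lop (fun k l => A j k l q) (fun k l => Ab j k l q) (fun k l => Gam j k l q) (fun J0 => S J0 q) J0));
  last by move=> J0; rewrite HS.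
rewrite !Lop_oppX Lop_Rc.
rewrite -(Lop_comm t).
rewrite /Defs.Lj /Lf /=.
rewrite (_ : csumo _ = - csumo (fun m => RtoC (cc m i j q.1) *
    Lop (fun x y => A m x y q) (fun x y => Ab m x y q) (fun x y => Gam m x y q) (fun J0 => S J0 q) I)); last first.
  rewrite !csumoE csum_opp; apply: csum_ext => m; ring.
set s1 := csumo _.
repeat match goal with |- context [Lop ?a ?b ?g ?X ?I0] => let z := fresh "z" in set z := Lop a b g X I0 end.
ring.
Qed.

Definition rho (i j : 'I_4) (e : EE J tp) : C :=
  match e with
  | inl _ => RtoC 0
  | inr (inl x) => - Lop (Rcf A i j) (Rcf Ab i j) (Rcf Gam i j) (fun J0 => Sf (tag x) J0 q) (tagged x)
  | inr (inr y) => - Lop (Rcf A i j) (Rcf Ab i j) (Rcf Gam i j) (fun J0 => tauSf (tag y) J0 q) (tagged y)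
  end.

Lemma kap_der i j e :
  Dop i (kap j e) q - Dop j (kap i e) q
  = csumo (fun m => RtoC (cc m i j q.1) * kap m e q) + rho i j e.
Proof.
case: e => [k|[[P I]|[P I]]] /=.
- rewrite bracketC Cplus_0_r'; by [].
- rewrite (kap_gen _ (Sf P)) /Cminus //.
    move=> i' I'; exact: Dop_Sf.
  move=> I'; exact: dSf.
- rewrite (kap_gen _ (tauSf P)) /Cminus //.
    move=> i' I'; exact: Dop_tSf.
  move=> I'; exact: dtSf.
Qed.

Lemma Dop_comm i j F : smooth F ->
  Dop i (Dop j F) q - Dop j (Dop i F) q
  = csumo (fun m => RtoC (cc m i j q.1) * Dop m F q) + csum (fun e => rho i j e * delE e F q).
Proof.
move=> HF; rewrite Dop_comm0 //.
under csum_ext => e do rewrite kap_der.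
rewrite (_ : csum _ = csum (fun e => csumo (fun m => RtoC (cc m i j q.1) * kap m e q) * delE e F q)
   + csum (fun e => rho i j e * delE e F q)); last first.
  rewrite -csum_add; apply: csum_ext => e; ring.
congr (_ + _).
rewrite csumoE; under csum_ext => e do rewrite csumoE csum_mulr.
rewrite csum_exch; apply: csum_ext => m.
rewrite Dop_VF /VF csum_mull; apply: csum_ext => e; ring.
Qed.

Notation nab := (nab J tp Ups A Ab Gam).
Notation LA m := (fun k l => A m k l q).
Notation LAb m := (fun k l => Ab m k l q).
Notation LG m := (fun k l => Gam m k l q).

Lemma nab_comm t (Z : field J tp t) i j I : (forall I', smooth (Z I')) ->
  nab i (nab j Z) I q - nab j (nab i Z) I q
  = csumo (fun m => RtoC (cc m i j q.1) * nab m Z I q) + csum (fun e => rho i j e * delE e (Z I) q)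
  + Lop (Rcf A i j) (Rcf Ab i j) (Rcf Gam i j) (fun J0 => Z J0 q) I.
Proof.
move=> HZ.
have dZ : forall I', diffat q (Z I') by move=> I'; exact: (smooth_diffat J tp Ux).
have HC := Dop_comm i j (Z I) (HZ I).
rewrite /Defs.nab; cbv beta.
rewrite (der_add _ _ _ _ (Dop_isder i)); [| exact: dDop | exact: dLj].
rewrite (der_add _ _ _ _ (Dop_isder j)); [| exact: dDop | exact: dLj].
rewrite !Dop_Lf //.
rewrite /Defs.Lj /Lf; cbv beta.
rewrite (Lop_addX t (LA i) (LAb i) (LG i) (fun J0 => Dop j (Z J0) q)
  (fun J0 => Lop (LA j) (LAb j) (LG j) (fun J1 => Z J1 q) J0)).
rewrite (Lop_addX t (LA j) (LAb j) (LG j) (fun J0 => Dop i (Z J0) q)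
  (fun J0 => Lop (LA i) (LAb i) (LG i) (fun J1 => Z J1 q) J0)).
rewrite (Lop_extX _ (LA i) (LAb i) (LG i) (fun J0 => Lop (LA j) (LAb j) (LG j) (fun J1 => Z J1 q) J0)
   (Lop (LA j) (LAb j) (LG j) (fun J1 => Z J1 q))) //.
rewrite (Lop_extX _ (LA j) (LAb j) (LG j) (fun J0 => Lop (LA i) (LAb i) (LG i) (fun J1 => Z J1 q) J0)
   (Lop (LA i) (LAb i) (LG i) (fun J1 => Z J1 q))) //.
rewrite Lop_Rc -(Lop_comm t).
rewrite (_ : csumo _ = csumo (fun m => RtoC (cc m i j q.1) * Dop m (Z I) q)
   + csumo (fun m => RtoC (cc m i j q.1) * Lop (LA m) (LAb m) (LG m) (fun J0 => Z J0 q) I)); last first.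
  rewrite !csumoE -csum_add; apply: csum_ext => m; ring.
have -> : Dop i (Dop j (Z I)) q = Dop j (Dop i (Z I)) q
   + (csumo (fun m => RtoC (cc m i j q.1) * Dop m (Z I) q) + csum (fun e => rho i j e * delE e (Z I) q)).
  rewrite -HC; ring.
set s1 := csumo (fun m => _ * Dop m (Z I) q).
set s2 := csumo (fun m => _ * Lop _ _ _ _ I).
set s3 := csum _.
set d1 := Dop j (Dop i (Z I)) q.
set d2 := Dop i (Dop j (Z I)) q.
repeat match goal with |- context [Lop ?a ?b ?g ?X ?I0] => let z := fresh "z" in set z := Lop a b g X I0 end.
ring.
Qed.

Lemma Lj_vec j (Y : field J tp vec_ty) k :
  Lj j Y (vidx k) q = csumo (fun v => Gam j k v q * Y (vidx v) q).
Proof.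
rewrite /Defs.Lj /Lf /Lop /csumo /=.
rewrite !big_ord0 big_ord1.
have -> : ie (vidx k) ord0 = k by rewrite /ie /vidx /mk /= ffunE.
rewrite (_ : \big[Cplus/RtoC 0]_(i < 4) _ = \big[Cplus/RtoC 0]_(i < 4) (Gam j k i q * Y (vidx i) q)).
  set s := \big[_/_]_(i < 4) _; rewrite /Cminus; ring.
apply: eq_bigr => v _; congr (_ * Y _ q).
rewrite /vidx /mk /ia /ib /ic /id' /ie /if' /=; congr (_, _); congr (_, _).
apply/ffunP => mu; rewrite updE !ffunE; by rewrite (ord1 mu) eqxx.
Qed.

Lemma vupper_vidx k : vupper (vidx k) = k.
Proof. by rewrite /vupper /ie /vidx /mk /= ffunE. Qed.

Lemma Dop_ext i F G : (forall p, F p = G p) -> Dop i F q = Dop i G q.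
Proof. move=> H; have -> : F = G by apply: functional_extensionality. by []. Qed.
Lemma Dop_add i F G : diffat q F -> diffat q G -> Dop i (fun p => F p + G p) q = Dop i F q + Dop i G q.
Proof. move=> HF HG; exact: (der_add _ _ _ _ (Dop_isder i)). Qed.
Lemma Dop_mul i F G : diffat q F -> diffat q G -> Dop i (fun p => F p * G p) q = Dop i F q * G q + F q * Dop i G q.
Proof. move=> HF HG; exact: (der_mul _ _ _ _ (Dop_isder i)). Qed.
Lemma Dop_sum i {T : finType} (F : T -> pt -> C) : (forall k, diffat q (F k)) ->
  Dop i (fun p => csum (fun k => F k p)) q = csum (fun k => Dop i (F k) q).
Proof. move=> H; exact: (der_sum _ _ _ _ (Dop_isder i)). Qed.

Lemma nabE t j (W : field J tp t) I p : nab j W I p = Dop j (W I) p + Lj j W I p.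
Proof. by []. Qed.
Notation nabV := (nabV J tp Ups A Ab Gam).
Notation vcomp := (vcomp J tp).
Lemma nabVE t (Y : field J tp vec_ty) (Z : field J tp t) I p :
  nabV Y Z I p = csum (fun k => vcomp Y k p * nab k Z I p).
Proof. by []. Qed.

Lemma dsm F : smooth F -> diffat q F.
Proof. move=> HF; exact: (smooth_diffat J tp Ux). Qed.

Lemma dnab t (Z : field J tp t) k I : (forall I', smooth (Z I')) -> diffat q (nab k Z I).
Proof.
move=> HZ; apply: (diffat_ext _ _ _ (fun p => Dop k (Z I) p + Lj k Z I p)) => //.
apply: diffat_add; first exact: dDop.
apply: dLj => I'; exact: (smooth_diffat J tp Ux).
Qed.

Lemma nab_nabV t (Y : field J tp vec_ty) (Z : field J tp t) j I :
  (forall I', smooth (Y I')) -> (forall I', smooth (Z I')) ->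
  nab j (nabV Y Z) I q = csumo (fun k => Dop j (vcomp Y k) q * nab k Z I q + vcomp Y k q * nab j (nab k Z) I q).
Proof.
move=> HY HZ.
rewrite nabE (Dop_ext j _ (fun p => csum (fun k => vcomp Y k p * nab k Z I p))) //.
rewrite Dop_sum; last first.
  move=> k; apply: diffat_mul; [apply: dsm; exact: HY | exact: dnab].
rewrite /Defs.Lj /Lf.
rewrite (Lop_extX _ _ _ _ _ (fun J0 => csum (fun k => vcomp Y k q * nab k Z J0 q))) // Lop_sumX.
rewrite csumoE -csum_add; apply: csum_ext => k.
rewrite Dop_mul; [| apply: dsm; exact: HY | exact: dnab].
rewrite (nabE _ j (nab k Z)) /Defs.Lj /Lf.
repeat match goal with |- context [Lop ?a ?b ?g ?X ?I0] => let z := fresh "z" in set z := Lop a b g X I0 end.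
ring.
Qed.

Ltac lring := repeat match goal with |- context [Lop ?a ?b ?g ?X ?I0] => let z := fresh "z" in set z := Lop a b g X I0 end; ring.

Lemma nabV_vec (X Y : field J tp vec_ty) k :
  nabV X Y (vidx k) q = csumo (fun j => X (vidx j) q * Dop j (Y (vidx k)) q)
    + csumo (fun i => csumo (fun j => Gam i k j q * X (vidx i) q * Y (vidx j) q)).
Proof.
rewrite nabVE !csumoE -csum_add; apply: csum_ext => i.
rewrite nabE Lj_vec csumoE /vcomp Cmult_plus_distr_l csum_mull; congr (_ + _).
apply: csum_ext => j; ring.
Qed.

Lemma Tor_vec (X Y : field J tp vec_ty) k :
  Tor J tp cc Gam X Y (vidx k) q = csumo (fun i => csumo (fun j =>
    (Gam i k j q - Gam j k i q - RtoC (cc k i j q.1)) * X (vidx i) q * Y (vidx j) q)).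
Proof. rewrite /Tor; cbv zeta; by rewrite vupper_vidx. Qed.

Lemma Uf_comp (X Y : field J tp vec_ty) k :
  vcomp (Uf J tp Ups cc A Ab Gam X Y) k q
  = csumo (fun j => vcomp X j q * Dop j (vcomp Y k) q - vcomp Y j q * Dop j (vcomp X k) q)
  + csumo (fun i => csumo (fun j => RtoC (cc k i j q.1) * vcomp X i q * vcomp Y j q)).
Proof.
rewrite /vcomp /Uf nabV_vec nabV_vec Tor_vec !csumoE.
have E : csum (fun i => csumo (fun j => Gam i k j q * X (vidx i) q * Y (vidx j) q))
   - csum (fun i => csumo (fun j => Gam i k j q * Y (vidx i) q * X (vidx j) q))
   - csum (fun i => csumo (fun j => (Gam i k j q - Gam j k i q - RtoC (cc k i j q.1)) * X (vidx i) q * Y (vidx j) q))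
   = csum (fun i => csumo (fun j => RtoC (cc k i j q.1) * X (vidx i) q * Y (vidx j) q)).
  rewrite [X in _ - X - _]csum_exch -!csum_sub; apply: csum_ext => i.
  rewrite !csumoE -!csum_sub; apply: csum_ext => j; ring.
rewrite csum_sub -E.
set s1 := csum (fun i => csumo _).
set s2 := csum (fun i => csumo _).
set s3 := csum (fun i => csumo _).
set s4 := csum (fun j => _ * Dop j _ q).
set s5 := csum (fun j => _ * Dop j _ q).
ring.
Qed.

Lemma Lop_Nc t (X Y : field J tp vec_ty) (W : midx t -> C) I :
  Lop (fun p r => Nc J tp Ups cc A Ab Gam A X Y p r q) (fun p r => Nc J tp Ups cc A Ab Gam Ab X Y p r q)
      (fun p r => Nc J tp Ups cc A Ab Gam Gam X Y p r q) W I
  = csumo (fun i => csumo (fun j => vcomp X i q * vcomp Y j q * Lop (Rcf A i j) (Rcf Ab i j) (Rcf Gam i j) W I)).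
Proof.
have E : forall n (B : 'I_4 -> 'I_n -> 'I_n -> pt -> C) x y,
    Nc J tp Ups cc A Ab Gam B X Y x y q
    = csum (fun i => vcomp X i q * csum (fun j => vcomp Y j q * Rc J tp Ups cc A Ab Gam B x y i j q)).
  move=> n B x y; rewrite /Nc csumoE; apply: csum_ext => i.
  rewrite csumoE csum_mull; apply: csum_ext => j; ring.
rewrite (Lop_extM _ _ _ _
  (fun x y => csum (fun i => vcomp X i q * csum (fun j => vcomp Y j q * Rc J tp Ups cc A Ab Gam A x y i j q)))
  (fun x y => csum (fun i => vcomp X i q * csum (fun j => vcomp Y j q * Rc J tp Ups cc A Ab Gam Ab x y i j q)))
  (fun x y => csum (fun i => vcomp X i q * csum (fun j => vcomp Y j q * Rc J tp Ups cc A Ab Gam Gam x y i j q))));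
  try (move=> x y; exact: E).
rewrite Lop_sumM csumoE; apply: csum_ext => i.
rewrite Lop_sumM csumoE csum_mull; apply: csum_ext => j.
lring.
Qed.

Lemma rho_exp i j F :
  csum (fun e => rho i j e * delE e F q)
  = csumo (fun Q => csum (fun I' => - Lop (Rcf A i j) (Rcf Ab i j) (Rcf Gam i j) (fun J0 => Sf Q J0 q) I'
        * dz J tp (mkc J tp Q I') F q))
  + csumo (fun Q => csum (fun I' => - Lop (Rcf A i j) (Rcf Ab i j) (Rcf Gam i j) (fun J0 => tauSf Q J0 q) I'
        * dzb J tp (mkc J tp Q (swap_idx I')) F q)).
Proof.
rewrite csum_sumT csum_sumT !csum_sig /=.
rewrite (_ : csum (fun i0 : 'I_4 => _) = RtoC 0); last first.
  transitivity (csum (fun _ : 'I_4 => RtoC 0)); [apply: csum_ext => k; ring | exact: csum0].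
by rewrite Cplus_0_l'.
Qed.

Lemma sum_pull {T : 'I_J -> finType} (c : 'I_4 -> 'I_4 -> C)
  (L : 'I_4 -> 'I_4 -> forall Q, T Q -> C) (d : forall Q, T Q -> C) :
  csumo (fun Q => csum (fun I' => - csumo (fun i => csumo (fun j => c i j * L i j Q I')) * d Q I'))
  = csumo (fun i => csumo (fun j => c i j * csumo (fun Q => csum (fun I' => - L i j Q I' * d Q I')))).
Proof.
transitivity (csumo (fun Q => csum (fun I' => csum (fun i => csum (fun j => c i j * (- L i j Q I' * d Q I')))))).
  apply: csum_ext => Q; apply: csum_ext => I'.
  rewrite csumoE csum_opp csum_mulr; apply: csum_ext => i.
  rewrite csumoE csum_opp csum_mulr; apply: csum_ext => j; ring.
transitivity (csumo (fun Q => csum (fun i => csum (fun j => csum (fun I' => c i j * (- L i j Q I' * d Q I')))))).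
  apply: csum_ext => Q; rewrite csum_exch; apply: csum_ext => i; by rewrite csum_exch.
rewrite csumoE csum_exch; apply: csum_ext => i; rewrite csum_exch; apply: csum_ext => j.
rewrite !csumoE csum_mull; apply: csum_ext => Q; by rewrite csum_mull.
Qed.

Lemma LHS_exp t (X Y : field J tp vec_ty) (Z : field J tp t) I :
  (forall I', smooth (X I')) -> (forall I', smooth (Y I')) -> (forall I', smooth (Z I')) ->
  nabV X (nabV Y Z) I q - nabV Y (nabV X Z) I q
  = csumo (fun k => csumo (fun j => vcomp X j q * Dop j (vcomp Y k) q - vcomp Y j q * Dop j (vcomp X k) q) * nab k Z I q)
  + csumo (fun i => csumo (fun j => vcomp X i q * vcomp Y j q * (nab i (nab j Z) I q - nab j (nab i Z) I q))).
Proof.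
move=> HX HY HZ.
have N1 := fun j => nab_nabV t Y Z j I HY HZ.
have N2 := fun j => nab_nabV t X Z j I HX HZ.
rewrite !nabVE.
under csum_ext => k do rewrite N1.
under [in X in _ - X]csum_ext => k do rewrite N2.
set P1 := csum (fun k => csum (fun j => vcomp X k q * Dop k (vcomp Y j) q * nab j Z I q)).
set P2 := csum (fun k => csum (fun j => vcomp X k q * vcomp Y j q * nab k (nab j Z) I q)).
set Q1 := csum (fun k => csum (fun j => vcomp Y k q * Dop k (vcomp X j) q * nab j Z I q)).
set Q2 := csum (fun k => csum (fun j => vcomp Y k q * vcomp X j q * nab k (nab j Z) I q)).
have hA : csum (fun k => vcomp X k q * csumo (fun j => Dop k (vcomp Y j) q * nab j Z I q
     + vcomp Y j q * nab k (nab j Z) I q)) = P1 + P2.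
  rewrite /P1 /P2 -csum_add; apply: csum_ext => k.
  rewrite csumoE csum_mull -csum_add; apply: csum_ext => j; ring.
have hB : csum (fun k => vcomp Y k q * csumo (fun j => Dop k (vcomp X j) q * nab j Z I q
     + vcomp X j q * nab k (nab j Z) I q)) = Q1 + Q2.
  rewrite /Q1 /Q2 -csum_add; apply: csum_ext => k.
  rewrite csumoE csum_mull -csum_add; apply: csum_ext => j; ring.
rewrite hA hB.
have hC : csumo (fun k => csumo (fun j => vcomp X j q * Dop j (vcomp Y k) q - vcomp Y j q * Dop j (vcomp X k) q) * nab k Z I q)
   = P1 - Q1.
  rewrite /P1 /Q1 [X in _ = X - _]csum_exch [X in _ = _ - X]csum_exch -csum_sub csumoE.
  apply: csum_ext => k; rewrite csumoE csum_mulr -csum_sub; apply: csum_ext => j; ring.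
have hD : csumo (fun i => csumo (fun j => vcomp X i q * vcomp Y j q * (nab i (nab j Z) I q - nab j (nab i Z) I q)))
   = P2 - Q2.
  rewrite /P2 /Q2 [X in _ = _ - X]csum_exch -csum_sub csumoE.
  apply: csum_ext => i; rewrite csumoE -csum_sub; apply: csum_ext => j; ring.
rewrite hC hD; ring.
Qed.

Lemma main_at t (X Y : field J tp vec_ty) (Z : field J tp t) I :
  (forall I', smooth (X I')) -> (forall I', smooth (Y I')) -> (forall I', smooth (Z I')) ->
  nabV X (nabV Y Z) I q - nabV Y (nabV X Z) I q
  = nabV (Uf J tp Ups cc A Ab Gam X Y) Z I q
  + csumo (fun Q : 'I_J => vnab J tp Q (UQ J tp Ups cc A Ab Gam X Y Q) Z I q)
  + csumo (fun Q : 'I_J => vnabb J tp Q (UbQ J tp Ups cc A Ab Gam X Y Q) Z I q)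
  + DN J tp Ups cc A Ab Gam X Y Z I q.
Proof.
move=> HX HY HZ.
rewrite LHS_exp //.
pose c i j := vcomp X i q * vcomp Y j q.
pose M i j := csumo (fun m => RtoC (cc m i j q.1) * nab m Z I q).
pose V i j := csumo (fun Q => csum (fun I' => - Lop (Rcf A i j) (Rcf Ab i j) (Rcf Gam i j) (fun J0 => Sf Q J0 q) I'
        * dz J tp (mkc J tp Q I') (Z I) q)).
pose Vb i j := csumo (fun Q => csum (fun I' => - Lop (Rcf A i j) (Rcf Ab i j) (Rcf Gam i j) (fun J0 => tauSf Q J0 q) I'
        * dzb J tp (mkc J tp Q (swap_idx I')) (Z I) q)).
pose L i j := Lop (Rcf A i j) (Rcf Ab i j) (Rcf Gam i j) (fun J0 => Z J0 q) I.
have hT : csumo (fun i => csumo (fun j => vcomp X i q * vcomp Y j q * (nab i (nab j Z) I q - nab j (nab i Z) I q)))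
   = csumo (fun i => csumo (fun j => c i j * M i j)) + csumo (fun i => csumo (fun j => c i j * V i j))
   + csumo (fun i => csumo (fun j => c i j * Vb i j)) + csumo (fun i => csumo (fun j => c i j * L i j)).
  rewrite !csumoE -!csum_add; apply: csum_ext => i.
  rewrite !csumoE -!csum_add; apply: csum_ext => j.
  rewrite nab_comm // rho_exp /c /M /V /Vb /L.
  set x1 := csumo _. set x2 := csumo _. set x3 := csumo _. set x4 := Lop _ _ _ _ I.
  ring.
rewrite hT.
have hU : nabV (Uf J tp Ups cc A Ab Gam X Y) Z I q
   = csumo (fun k => csumo (fun j => vcomp X j q * Dop j (vcomp Y k) q - vcomp Y j q * Dop j (vcomp X k) q) * nab k Z I q)
   + csumo (fun i => csumo (fun j => c i j * M i j)).
  rewrite nabVE.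
  under csum_ext => k do rewrite Uf_comp //.
  rewrite (_ : csum _ = csum (fun k => csumo (fun j => vcomp X j q * Dop j (vcomp Y k) q - vcomp Y j q * Dop j (vcomp X k) q) * nab k Z I q)
     + csum (fun k => csumo (fun i => csumo (fun j => RtoC (cc k i j q.1) * vcomp X i q * vcomp Y j q)) * nab k Z I q)); last first.
    rewrite -csum_add; apply: csum_ext => k; ring.
  congr (_ + _).
  rewrite /c /M.
  transitivity (csum (fun k => csum (fun i => csum (fun j => RtoC (cc k i j q.1) * vcomp X i q * vcomp Y j q * nab k Z I q)))).
    apply: csum_ext => k; rewrite csumoE csum_mulr; apply: csum_ext => i; by rewrite csumoE csum_mulr.
  rewrite csum_exch csumoE; apply: csum_ext => i.
  rewrite csum_exch csumoE; apply: csum_ext => j.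
  rewrite csumoE csum_mull; apply: csum_ext => k; ring.
rewrite hU.
have hV : csumo (fun Q : 'I_J => vnab J tp Q (UQ J tp Ups cc A Ab Gam X Y Q) Z I q)
   = csumo (fun i => csumo (fun j => c i j * V i j)).
  rewrite /vnab /UQ /DN /Lf.
  rewrite csumoE.
  under csum_ext => Q do under csum_ext => I' do rewrite Lop_Nc.
  exact: (sum_pull c (fun i j Q I' => Lop (Rcf A i j) (Rcf Ab i j) (Rcf Gam i j) (fun J0 => Sf Q J0 q) I')
     (fun Q I' => dz J tp (mkc J tp Q I') (Z I) q)).
have hVb : csumo (fun Q : 'I_J => vnabb J tp Q (UbQ J tp Ups cc A Ab Gam X Y Q) Z I q)
   = csumo (fun i => csumo (fun j => c i j * Vb i j)).
  rewrite /vnabb /UbQ /DN /Lf.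
  rewrite csumoE.
  under csum_ext => Q do under csum_ext => I' do rewrite Lop_Nc.
  exact: (sum_pull c (fun i j Q I' => Lop (Rcf A i j) (Rcf Ab i j) (Rcf Gam i j) (fun J0 => tauSf Q J0 q) I')
     (fun Q I' => dzb J tp (mkc J tp Q (swap_idx I')) (Z I) q)).
have hL : DN J tp Ups cc A Ab Gam X Y Z I q = csumo (fun i => csumo (fun j => c i j * L i j)).
  by rewrite /DN /Lf Lop_Nc.
rewrite hV hVb hL.
set y1 := csumo (fun k => _ * nab k Z I q).
set y2 := csumo (fun i => csumo (fun j => c i j * M i j)).
set y3 := csumo (fun i => csumo (fun j => c i j * V i j)).
set y4 := csumo (fun i => csumo (fun j => c i j * Vb i j)).
set y5 := csumo (fun i => csumo (fun j => c i j * L i j)).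
ring.
Qed.
End Main.

Theorem mainTheorem9 (J : nat) (tp : 'I_J -> stype)
  (Ux : ('I_4 -> R) -> Prop)
  (Ups : 'I_4 -> 'I_4 -> ('I_4 -> R) -> R)
  (cc : 'I_4 -> 'I_4 -> 'I_4 -> ('I_4 -> R) -> R)
  (A Ab : 'I_4 -> 'I_2 -> 'I_2 -> pt J tp -> C)
  (Gam : 'I_4 -> 'I_4 -> 'I_4 -> pt J tp -> C)
  (X Y : field J tp vec_ty) :
  open Ux ->
  frame_on Ux Ups ->
  bracket_rel Ux Ups cc ->
  (forall k i, smooth_on J tp (fun q => Ux q.1) (fun q => RtoC (Ups k i q.1))) ->
  (forall j k i, smooth_on J tp (fun q => Ux q.1) (A j k i)) ->
  (forall j k i, smooth_on J tp (fun q => Ux q.1) (Ab j k i)) ->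
  (forall j k i, smooth_on J tp (fun q => Ux q.1) (Gam j k i)) ->
  (forall I, smooth_on J tp (fun q => Ux q.1) (X I)) ->
  (forall I, smooth_on J tp (fun q => Ux q.1) (Y I)) ->
  forall (t : stype) (Z : field J tp t),
  (forall I, smooth_on J tp (fun q => Ux q.1) (Z I)) ->
  forall (I : midx t) (q : pt J tp), Ux q.1 ->
    nabV J tp Ups A Ab Gam X (nabV J tp Ups A Ab Gam Y Z) I q
  - nabV J tp Ups A Ab Gam Y (nabV J tp Ups A Ab Gam X Z) I q
  = nabV J tp Ups A Ab Gam (Uf J tp Ups cc A Ab Gam X Y) Z I q
  + csumo (fun Q : 'I_J => vnab J tp Q (UQ J tp Ups cc A Ab Gam X Y Q) Z I q)
  + csumo (fun Q : 'I_J => vnabb J tp Q (UbQ J tp Ups cc A Ab Gam X Y Q) Z I q)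
  + DN J tp Ups cc A Ab Gam X Y Z I q.
Proof.
move=> HU Hfr Hbr HUps HA HAb HGam HX HY t Z HZ I q Hq.
exact: (main_at J tp Ux Ups cc A Ab Gam HU Hbr HUps HA HAb HGam q Hq t X Y Z I HX HY HZ).
Qed.
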